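(* Let $q\ge1$, $\lambda$ a primitive $q$th root of unity, $g(z)=\lambda z+O(z^2)$ holomorphic near $0$ with $f:=g^{\circ q}$ of the form $f(z)=z+z^{q+1}+bz^{2q+1}+O(z^{2q+2})$, and $0<r_0<1$ such that $f$ is univalent in a neighborhood of $\overline{\mathbb D}(0,r_0)$, $0$ is its only fixed point in $\overline{\mathbb D}(0,r_0)$ and $\operatorname{Re}(f')>0$ there. Let $g_n(z)=\lambda_nz+O(z^2)$, $|\lambda_n|\ne1$, with $f_n:=g_n^{\circ q}$ holomorphic near $\overline{\mathbb D}(0,r_0)$ and $f_n\to f$ uniformly on $\overline{\mathbb D}(0,r_0)$; for large $n$ the fixed points of $f_n$ in $\overline{\mathbb D}(0,r_0)$ are $0$ and the points of a $q$-cycle $\mathscr O_n$ of $g_n$. Let $0<r_1<r_0/2$ be such that $\overline{\mathbb D}(0,r_1)$ is mapped univalently into $\mathbb D(0,r_0)$ by $f$ and $f^{-1}$ and $\sup_{|z|\le r_1}|f_n(z)-z|\le r_1/2$ for all large $n$. Then there is $0<r_2<r_1$ such that for all sufficiently large $n$: if $z_0$, $z_1:=f_n(z_0)$, $z_2:=f_n(z_1)$ lie in $\mathbb D(0,r_2)$ and are not fixed by $f_n$, then the segment $[z_1,z_2]$ and the curve $f_n([z_0,z_1])$ are homotopic (with fixed endpoints) in $\mathbb D(0,r_1)\setminus(\{0\}\cup\mathscr O_n)$. *)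

(* Defs.v *)
From Stdlib Require Import Reals.
From Coquelicot Require Import Coquelicot.

Open Scope R_scope.

Fixpoint iterc (n : nat) (g : C -> C) (z : C) : C :=
  match n with
  | O => z
  | S m => g (iterc m g z)
  end.

Definition disk (r : R) (z : C) : Prop := Cmod z < r.
Definition cdisk (r : R) (z : C) : Prop := Cmod z <= r.

Definition holomorphic_on (U : C -> Prop) (f : C -> C) : Prop :=
  forall z, U z -> @ex_derive C_AbsRing C_NormedModule f z.

Definition injective_on (U : C -> Prop) (f : C -> C) : Prop :=
  forall z w, U z -> U w -> f z = f w -> z = w.

Definition holomorphic_near (K : C -> Prop) (f : C -> C) : Prop :=
  exists U : C -> Prop, @open C_UniformSpace U /\ (forall z, K z -> U z) /\
    holomorphic_on U f.

Definition univalent_near (K : C -> Prop) (f : C -> C) : Prop :=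
  exists U : C -> Prop, @open C_UniformSpace U /\ (forall z, K z -> U z) /\
    holomorphic_on U f /\ injective_on U f.

Definition unit_interval (t : R) : Prop := 0 <= t <= 1.
Definition unit_square (p : R * R) : Prop :=
  unit_interval (fst p) /\ unit_interval (snd p).

Definition path_continuous (gam : R -> C) : Prop :=
  forall t, unit_interval t ->
    filterlim gam (within unit_interval (locally t)) (locally (gam t)).

Definition homotopic_rel_endpoints (X : C -> Prop) (gam0 gam1 : R -> C) : Prop :=
  path_continuous gam0 /\ path_continuous gam1 /\
  gam0 0 = gam1 0 /\ gam0 1 = gam1 1 /\
  exists H : R * R -> C,
    (forall p, unit_square p ->
       filterlim H (within unit_square (locally p)) (locally (H p))) /\
    (forall p, unit_square p -> X (H p)) /\
    (forall t, unit_interval t -> H (0, t) = gam0 t) /\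
    (forall t, unit_interval t -> H (1, t) = gam1 t) /\
    (forall s, unit_interval s -> H (s, 0) = gam0 0) /\
    (forall s, unit_interval s -> H (s, 1) = gam0 1).

Definition segment (a b : C) (t : R) : C := Cplus a (Cmult (RtoC t) (Cminus b a)).

Definition primitive_root (q : nat) (lam : C) : Prop :=
  Cpow lam q = RtoC 1 /\ forall k, (0 < k < q)%nat -> Cpow lam k <> RtoC 1.

Definition exact_period (q : nat) (g : C -> C) (w : C) : Prop :=
  iterc q g w = w /\ forall k, (0 < k < q)%nat -> iterc k g w <> w.

Definition in_cycle (q : nat) (g : C -> C) (w z : C) : Prop :=
  exists k, (k < q)%nat /\ z = iterc k g w.

(* Main.v *)
Require Import Defs.
From Stdlib Require Import Reals Lra Lia ZArith.
From Coquelicot Require Import Coquelicot.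
Open Scope R_scope.

Definition CR := C_R_CompleteNormedModule.

Lemma Cmod_re (z : C) : Rabs (fst z) <= Cmod z.
Proof. apply (re_le_Cmod z). Qed.
Lemma Cmod_im (z : C) : Rabs (snd z) <= Cmod z.
Proof.
  destruct z as [x y]; unfold Cmod; simpl.
  rewrite <- sqrt_Rsqr_abs. apply sqrt_le_1_alt. unfold Rsqr. nra.
Qed.
Lemma Cmod_le_sum (z : C) : Cmod z <= Rabs (fst z) + Rabs (snd z).
Proof.
  destruct z as [x y]; unfold Cmod; simpl.
  rewrite <- (sqrt_Rsqr (Rabs x + Rabs y)) by (pose proof (Rabs_pos x); pose proof (Rabs_pos y); lra).
  apply sqrt_le_1_alt. unfold Rsqr.
  pose proof (Rabs_pos x); pose proof (Rabs_pos y).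
  assert (x * x = Rabs x * Rabs x) by (rewrite <- Rabs_mult; rewrite Rabs_right; nra).
  assert (y * y = Rabs y * Rabs y) by (rewrite <- Rabs_mult; rewrite Rabs_right; nra).
  simpl. nra.
Qed.

Lemma norm_CR (z : C) : @norm R_AbsRing C_R_NormedModule z = Cmod z.
Proof.
  destruct z as [x y]. unfold norm; simpl. unfold prod_norm, Cmod; simpl.
  f_equal. simpl. unfold abs; simpl. rewrite !Rmult_1_r.
  rewrite <- !Rabs_mult. rewrite !Rabs_right by nra. reflexivity.
Qed.

Lemma continuous_CR (g : R -> C) (t : R) :
  (forall eps, 0 < eps -> exists del, 0 < del /\ forall s, Rabs (s - t) < del -> Cmod (g s - g t) < eps) ->
  @continuous R_UniformSpace CR g t.
Proof.
  intros H. apply (filterlim_locally (T:=R_UniformSpace) (U:=CR)). intros eps.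
  destruct (H eps (cond_pos eps)) as [d [Hd Hs]].
  exists (mkposreal d Hd). intros s Hst. simpl in Hst.
  specialize (Hs s Hst). 
  split; simpl; unfold ball; simpl; unfold AbsRing_ball, minus, plus, opp; simpl; unfold abs; simpl.
  - eapply Rle_lt_trans; [| exact Hs]. pose proof (Cmod_re (g s - g t)%C).
    destruct (g s), (g t); simpl in *. replace (r + - r1) with (r - r1) by ring. exact H0.
  - eapply Rle_lt_trans; [| exact Hs]. pose proof (Cmod_im (g s - g t)%C).
    destruct (g s), (g t); simpl in *. replace (r0 + - r2) with (r0 - r2) by ring. exact H0.
Qed.

Definition cdiff (u : C -> C) (z l : C) := forall eps, 0 < eps -> exists del, 0 < del /\
  forall w, Cmod (w - z) < del -> Cmod (u w - u z - l * (w - z)) <= eps * Cmod (w - z).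

Lemma ball_C_of_Cmod (z w : C) (e : R) : Cmod (w - z) < e -> @ball C_UniformSpace z e w.
Proof.
  intros H. split; simpl; unfold AbsRing_ball, minus, plus, opp; simpl; unfold abs; simpl.
  - eapply Rle_lt_trans; [| exact H]. pose proof (Cmod_re (w - z)%C).
    destruct w, z; simpl in *. replace (r + - r1) with (r - r1) by ring. exact H0.
  - eapply Rle_lt_trans; [| exact H]. pose proof (Cmod_im (w - z)%C).
    destruct w, z; simpl in *. replace (r0 + - r2) with (r0 - r2) by ring. exact H0.
Qed.

Lemma cdiff_of_is_derive (u : C -> C) (z l : C) :
  @is_derive C_AbsRing C_NormedModule u z l -> cdiff u z l.
Proof.
  intros [_ H] eps Heps.
  specialize (H z (fun P HP => HP) (mkposreal eps Heps)).
  destruct H as [d Hd].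
  exists d. split; [apply cond_pos|]. intros w Hw.
  assert (Hb : @ball (AbsRing_UniformSpace C_AbsRing) z d w).
  { unfold ball; simpl. unfold AbsRing_ball. unfold abs; simpl.
    replace (minus w z) with (w - z)%C by (unfold minus, plus, opp; simpl; ring). exact Hw. }
  specialize (Hd w Hb). simpl in Hd.
  unfold norm in Hd; simpl in Hd.
  replace (u w - u z - l * (w - z))%C with (minus (minus (u w) (u z)) (scal (minus w z) l)).
  exact Hd.
  unfold minus, plus, opp, scal; simpl. unfold mult; simpl. ring.
Qed.

Lemma cdiff_cont (u : C -> C) (z l : C) : cdiff u z l ->
  forall eps, 0 < eps -> exists del, 0 < del /\ forall w, Cmod (w - z) < del -> Cmod (u w - u z) < eps.
Proof.
  intros H eps Heps.
  destruct (H 1 Rlt_0_1) as [d [Hd Hw]].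
  exists (Rmin d (eps / (Cmod l + 2))). split.
  { apply Rmin_pos; auto. apply Rdiv_lt_0_compat; auto. pose proof (Cmod_ge_0 l); lra. }
  intros w Hwz. 
  assert (H1 : Cmod (w - z) < d) by (eapply Rlt_le_trans; [exact Hwz| apply Rmin_l]).
  assert (H2 : Cmod (w - z) < eps / (Cmod l + 2)) by (eapply Rlt_le_trans; [exact Hwz| apply Rmin_r]).
  specialize (Hw w H1).
  replace (u w - u z)%C with ((u w - u z - l * (w - z)) + l * (w - z))%C by ring.
  eapply Rle_lt_trans; [apply Cmod_triangle|]. rewrite Cmod_mult.
  pose proof (Cmod_ge_0 l). pose proof (Cmod_ge_0 (w - z)).
  apply Rmult_lt_compat_r with (r := Cmod l + 2) in H2; [|lra].
  unfold Rdiv in H2. rewrite Rmult_assoc, Rinv_l in H2 by lra. nra.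
Qed.

Lemma ex_derive_cdiff (u : C -> C) (z : C) :
  @ex_derive C_AbsRing C_NormedModule u z -> cdiff u z (C_derive u z).
Proof.
  intros H. apply cdiff_of_is_derive. apply C_derive_correct; auto.
Qed.

Lemma is_derive_CR (g : R -> C) (t : R) (d : C) :
  (forall eps, 0 < eps -> exists del, 0 < del /\ forall h, Rabs h < del ->
     Cmod (g (t + h) - g t - RtoC h * d) <= eps * Rabs h) ->
  @is_derive R_AbsRing CR g t d.
Proof.
  intros H. split.
  - apply is_linear_scal_l.
  - intros x Hx. apply (@is_filter_lim_locally_unique R_AbsRing (AbsRing_NormedModule R_AbsRing)) in Hx. subst x.
    intros eps. destruct (H eps (cond_pos eps)) as [del [Hdel Hh]].
    exists (mkposreal del Hdel). intros y Hy. simpl in Hy.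
    unfold ball in Hy; simpl in Hy; unfold AbsRing_ball, abs, minus, plus, opp in Hy; simpl in Hy.
    specialize (Hh (y + - t) Hy). assert (E : t + (y + - t) = y) by (clear; lra). rewrite E in Hh.
    rewrite norm_CR. unfold norm; simpl. unfold abs; simpl.
    match goal with |- Cmod ?X <= _ => replace X with (g y - g t - RtoC (y + - t) * d)%C end.
    exact Hh.
    destruct (g y), (g t), d. apply injective_projections; simpl.
    all: unfold minus, plus, opp, scal, mult; simpl; unfold mult; simpl; ring.
Qed.

Ltac ceq := apply injective_projections; simpl; try field; try ring.

Definition ucont (u : C -> C) (z : C) := forall eps, 0 < eps -> exists del, 0 < del /\
  forall w, Cmod (w - z) < del -> Cmod (u w - u z) < eps.

Definition sfun (u : C -> C) (a b : C) (t : R) : C := (u (a + RtoC t * (b - a)) * (b - a))%C.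
Definition segI (u : C -> C) (a b : C) : C := RInt (V:=CR) (sfun u a b) 0 1.
Definition mid (a b : C) : C := ((fst a + fst b) / 2, (snd a + snd b) / 2).

Lemma Cmod_sub_sym (a b : C) : Cmod (a - b) = Cmod (b - a).
Proof. replace (a - b)%C with (- (b - a))%C by ring. apply Cmod_opp. Qed.

Lemma Cmod_RtoC_mult (t : R) (z : C) : Cmod (RtoC t * z) = Rabs t * Cmod z.
Proof. rewrite Cmod_mult, Cmod_R. reflexivity. Qed.

Lemma sfun_cont (u : C -> C) (a b : C) (t : R) :
  ucont u (a + RtoC t * (b - a))%C -> @continuous R_UniformSpace CR (sfun u a b) t.
Proof.
  intros H. apply continuous_CR. intros eps Heps.
  set (K := Cmod (b - a) + 1).
  assert (HK : 0 < K) by (unfold K; pose proof (Cmod_ge_0 (b - a)); lra).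
  destruct (H (eps / K)) as [d [Hd Hw]]. { apply Rdiv_lt_0_compat; auto. }
  exists (d / K). split. { apply Rdiv_lt_0_compat; auto. }
  intros s Hs. unfold sfun.
  replace (u (a + RtoC s * (b - a)) * (b - a) - u (a + RtoC t * (b - a)) * (b - a))%C
    with ((u (a + RtoC s * (b - a)) - u (a + RtoC t * (b - a))) * (b - a))%C by ring.
  rewrite Cmod_mult.
  assert (H1 : Cmod (a + RtoC s * (b - a) - (a + RtoC t * (b - a))) < d).
  { replace (a + RtoC s * (b - a) - (a + RtoC t * (b - a)))%C with (RtoC (s - t) * (b - a))%C
      by (rewrite RtoC_minus; ring).
    rewrite Cmod_RtoC_mult.
    apply Rmult_lt_compat_r with (r := K) in Hs; auto.
    unfold Rdiv in Hs. rewrite Rmult_assoc, Rinv_l in Hs by lra.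
    unfold K in Hs. pose proof (Cmod_ge_0 (b - a)). pose proof (Rabs_pos (s - t)). nra. }
  specialize (Hw _ H1).
  apply Rmult_lt_compat_r with (r := K) in Hw; auto.
  unfold Rdiv in Hw. rewrite Rmult_assoc, Rinv_l in Hw by lra.
  unfold K in Hw. pose proof (Cmod_ge_0 (b - a)).
  match goal with |- Cmod ?X * _ < _ => pose proof (Cmod_ge_0 X) end. nra.
Qed.

Lemma seg_ex (u : C -> C) (a b : C) :
  (forall t, 0 <= t <= 1 -> ucont u (a + RtoC t * (b - a))%C) ->
  ex_RInt (V:=CR) (sfun u a b) 0 1.
Proof.
  intros H. apply ex_RInt_continuous. intros z Hz.
  rewrite Rmin_left, Rmax_right in Hz by lra.
  apply sfun_cont. apply H. exact Hz.
Qed.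

Lemma seg_bound (u : C -> C) (a b : C) (M : R) :
  ex_RInt (V:=CR) (sfun u a b) 0 1 ->
  (forall t, 0 <= t <= 1 -> Cmod (u (a + RtoC t * (b - a))%C) <= M) ->
  Cmod (segI u a b) <= M * Cmod (b - a).
Proof.
  intros Hex HM. unfold segI.
  rewrite <- norm_CR.
  apply (norm_RInt_le (V:=C_R_NormedModule) (sfun u a b) (fun _ => M * Cmod (b - a)) 0 1).
  - lra.
  - intros x Hx. rewrite norm_CR. unfold sfun. rewrite Cmod_mult.
    apply Rmult_le_compat_r; [apply Cmod_ge_0 | apply HM; lra].
  - apply (RInt_correct (V:=CR)). exact Hex.
  - pose proof (is_RInt_const (V:=R_NormedModule) 0 1 (M * Cmod (b - a))) as HC.
    assert (E : scal (1 - 0) (M * Cmod (b - a)) = M * Cmod (b - a))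
      by (unfold scal; simpl; unfold mult; simpl; ring).
    exact (eq_ind _ (fun v => is_RInt (V:=R_NormedModule) (fun _ => M * Cmod (b - a)) 0 1 v) HC _ E).
Qed.

Lemma convex_cdisk (a b : C) (t rho : R) : Cmod a <= rho -> Cmod b <= rho -> 0 <= t <= 1 ->
  Cmod (a + RtoC t * (b - a)) <= rho.
Proof.
  intros Ha Hb Ht.
  replace (a + RtoC t * (b - a))%C with (RtoC (1 - t) * a + RtoC t * b)%C
    by (rewrite RtoC_minus; ring).
  eapply Rle_trans; [apply Cmod_triangle|]. rewrite !Cmod_RtoC_mult.
  rewrite !Rabs_right by lra. nra.
Qed.

Lemma mid_eq (a b : C) : mid a b = (a + RtoC (1/2) * (b - a))%C.
Proof. unfold mid. destruct a, b. ceq. Qed.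

Lemma seg_split (u : C -> C) (a b : C) :
  ex_RInt (V:=CR) (sfun u a (mid a b)) 0 1 ->
  ex_RInt (V:=CR) (sfun u (mid a b) b) 0 1 ->
  segI u a b = (segI u a (mid a b) + segI u (mid a b) b)%C.
Proof.
  intros H1 H2. unfold segI.
  apply (is_RInt_unique (V:=CR)).
  apply (RInt_correct (V:=CR)) in H1. apply (RInt_correct (V:=CR)) in H2.
  apply (is_RInt_Chasles (V:=CR)) with (b := 1/2).
  - assert (H1' : is_RInt (V:=CR) (sfun u a (mid a b)) (2 * 0 + 0) (2 * (1/2) + 0) (RInt (V:=CR) (sfun u a (mid a b)) 0 1)).
    { replace (2 * 0 + 0) with 0 by ring. replace (2 * (1/2) + 0) with 1 by field. exact H1. }
    apply (is_RInt_comp_lin (V:=CR) _ 2 0 0 (1/2)) in H1'.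
    eapply is_RInt_ext; [| exact H1'].
    intros x _. unfold sfun. rewrite scal_R_Cmult.
    replace (RtoC (2 * x + 0) * (mid a b - a))%C
      with (RtoC x * (b - a))%C by (unfold mid; destruct a, b; ceq).
    unfold mid; destruct a, b. ceq.
  - assert (H2' : is_RInt (V:=CR) (sfun u (mid a b) b) (2 * (1/2) + -1) (2 * 1 + -1) (RInt (V:=CR) (sfun u (mid a b) b) 0 1)).
    { replace (2 * (1/2) + -1) with 0 by field. replace (2 * 1 + -1) with 1 by ring. exact H2. }
    apply (is_RInt_comp_lin (V:=CR) _ 2 (-1) (1/2) 1) in H2'.
    eapply is_RInt_ext; [| exact H2'].
    intros x _. unfold sfun. rewrite scal_R_Cmult.
    replace (mid a b + RtoC (2 * x + -1) * (b - mid a b))%C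
      with (a + RtoC x * (b - a))%C by (unfold mid; destruct a, b; ceq).
    unfold mid; destruct a, b. ceq.
Qed.

Lemma seg_swap (u : C -> C) (a b : C) :
  ex_RInt (V:=CR) (sfun u a b) 0 1 -> segI u b a = (- segI u a b)%C.
Proof.
  intros H. unfold segI at 1. apply (is_RInt_unique (V:=CR)).
  apply (RInt_correct (V:=CR)) in H.
  apply (is_RInt_swap (V:=CR)) in H.
  assert (H' : is_RInt (V:=CR) (sfun u a b) (-1 * 0 + 1) (-1 * 1 + 1) (opp (RInt (V:=CR) (sfun u a b) 0 1))).
  { replace (-1 * 0 + 1) with 1 by ring. replace (-1 * 1 + 1) with 0 by ring. exact H. }
  apply (is_RInt_comp_lin (V:=CR) _ (-1) 1 0 1) in H'.
  replace (- RInt (V:=CR) (sfun u a b) 0 1)%C with (opp (RInt (V:=CR) (sfun u a b) 0 1)) by reflexivity.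
  eapply is_RInt_ext; [| exact H'].
  intros x _. unfold sfun. rewrite scal_R_Cmult.
  replace (a + RtoC (-1 * x + 1) * (b - a))%C with (b + RtoC x * (a - b))%C by (destruct a, b; ceq).
  destruct a, b. ceq.
Qed.

Lemma pow2_pos (k : nat) : 0 < 2 ^ k.
Proof. apply pow_lt; lra. Qed.

Lemma pow2_ge (k : nat) : INR k + 1 <= 2 ^ k.
Proof.
  induction k; [simpl; lra|]. rewrite S_INR. simpl pow.
  pose proof (pow2_pos k). pose proof (pos_INR k). lra.
Qed.

Lemma small_pow2 (A eps : R) : 0 < eps -> exists k, A / 2 ^ k < eps.
Proof.
  intros He. destruct (archimed (A / eps)) as [H1 _].
  destruct (Z_lt_le_dec (up (A / eps)) 0) as [Hn | Hp].
  - exists 0%nat. simpl. assert (A / eps < 0) by (apply IZR_lt in Hn; lra).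
    assert (A < 0). { apply Rmult_lt_compat_r with (r := eps) in H; auto. unfold Rdiv in H.
      rewrite Rmult_assoc, Rinv_l in H; lra. } lra.
  - exists (Z.to_nat (up (A / eps))).
    pose proof (pow2_ge (Z.to_nat (up (A / eps)))) as Hg.
    rewrite INR_IZR_INZ in Hg. rewrite Z2Nat.id in Hg by lia.
    pose proof (pow2_pos (Z.to_nat (up (A / eps)))).
    apply Rmult_lt_reg_r with (r := 2 ^ Z.to_nat (up (A / eps))); auto.
    unfold Rdiv. rewrite Rmult_assoc, Rinv_l by lra. rewrite Rmult_1_r.
    assert (A < eps * (A / eps + 1)).
    { unfold Rdiv. rewrite Rmult_plus_distr_l. rewrite <- Rmult_assoc, (Rmult_comm eps A), Rmult_assoc, Rinv_r by lra. lra. }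
    assert (A / eps + 1 <= 2 ^ Z.to_nat (up (A / eps))) by lra.
    nra.
Qed.

Lemma geom_limit (x : nat -> R) (A : R) : 0 <= A ->
  (forall k, Rabs (x (S k) - x k) <= A / 2 ^ k) ->
  exists L, forall k, Rabs (x k - L) <= 2 * A / 2 ^ k.
Proof.
  intros HA Hx.
  assert (Hc : forall n m, Rabs (x (n + m)%nat - x n) <= 2 * A / 2 ^ n - 2 * A / 2 ^ (n + m)).
  { intros n m. induction m.
    - rewrite Nat.add_0_r. replace (x n - x n) with 0 by ring. rewrite Rabs_R0. lra.
    - replace (n + S m)%nat with (S (n + m)) by lia.
      replace (x (S (n + m)) - x n) with ((x (S (n + m)) - x (n + m)%nat) + (x (n + m)%nat - x n)) by ring.
      eapply Rle_trans; [apply Rabs_triang|].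
      specialize (Hx (n + m)%nat). simpl pow. pose proof (pow2_pos (n + m)).
      assert (E : 2 * A / (2 * 2 ^ (n + m)) = A / 2 ^ (n + m)) by (field; lra).
      rewrite E. lra. }
  assert (Hcc : Cauchy_crit x).
  { intros eps He. destruct (small_pow2 (2 * A) eps He) as [N HN].
    exists N. intros n m Hn Hm. unfold R_dist.
    assert (Hgen : forall p q, (N <= p)%nat -> (p <= q)%nat -> Rabs (x q - x p) < eps).
    { intros p q Hp Hq. replace q with (p + (q - p))%nat by lia.
      eapply Rle_lt_trans; [apply Hc|].
      pose proof (pow2_pos (p + (q - p))). pose proof (pow2_pos p). pose proof (pow2_pos N).
      assert (2 * A / 2 ^ (p + (q - p)) >= 0) by (apply Rle_ge; apply Rmult_le_pos; [lra| left; apply Rinv_0_lt_compat; lra]).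
      assert (2 * A / 2 ^ p <= 2 * A / 2 ^ N).
      { unfold Rdiv. apply Rmult_le_compat_l; [lra|]. apply Rinv_le_contravar; auto.
        replace p with (N + (p - N))%nat by lia. rewrite pow_add.
        assert (1 <= 2 ^ (p - N)) by (pose proof (pow2_ge (p - N)); pose proof (pos_INR (p - N)); lra). nra. }
      lra. }
    destruct (Nat.le_ge_cases n m).
    - rewrite Rabs_minus_sym. apply Hgen; auto.
    - apply Hgen; auto. }
  destruct (Stdlib.Reals.Rcomplete.R_complete x Hcc) as [L HL].
  exists L. intros k.
  destruct (Rle_dec (Rabs (x k - L)) (2 * A / 2 ^ k)) as [Hle|Hgt]; auto.
  exfalso. apply Rnot_le_lt in Hgt.
  destruct (HL (Rabs (x k - L) - 2 * A / 2 ^ k)) as [N HN]; [lra|].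
  specialize (HN (k + N)%nat ltac:(lia)). unfold R_dist in HN.
  specialize (Hc k N).
  pose proof (pow2_pos (k + N)).
  assert (0 <= 2 * A / 2 ^ (k + N)) by (apply Rmult_le_pos; [lra| left; apply Rinv_0_lt_compat; lra]).
  assert (Rabs (x k - L) <= Rabs (x k - x (k + N)%nat) + Rabs (x (k + N)%nat - L)).
  { replace (x k - L) with ((x k - x (k + N)%nat) + (x (k + N)%nat - L)) by ring. apply Rabs_triang. }
  rewrite Rabs_minus_sym in Hc. lra.
Qed.

Lemma seg_ftc (P p : C -> C) (a b : C) :
  (forall t, 0 <= t <= 1 -> cdiff P (a + RtoC t * (b - a))%C (p (a + RtoC t * (b - a))%C)) ->
  (forall t, 0 <= t <= 1 -> ucont p (a + RtoC t * (b - a))%C) ->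
  segI p a b = (P b - P a)%C.
Proof.
  intros HP Hp. unfold segI.
  apply (is_RInt_unique (V:=CR)).
  assert (E : (P b - P a)%C = minus (P (a + RtoC 1 * (b - a))%C) (P (a + RtoC 0 * (b - a))%C)).
  { replace (a + RtoC 1 * (b - a))%C with b by ring. replace (a + RtoC 0 * (b - a))%C with a by ring.
    reflexivity. }
  rewrite E.
  apply (is_RInt_derive (V:=CR) (fun t => P (a + RtoC t * (b - a))%C)).
  - intros t Ht. rewrite Rmin_left, Rmax_right in Ht by lra.
    apply is_derive_CR. intros eps He.
    set (K := Cmod (b - a) + 1).
    assert (HK : 0 < K) by (unfold K; pose proof (Cmod_ge_0 (b - a)); lra).
    destruct (HP t Ht (eps / K)) as [d [Hd Hw]]. { apply Rdiv_lt_0_compat; auto. }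
    exists (d / K). split. { apply Rdiv_lt_0_compat; auto. }
    intros h Hh.
    set (z := (a + RtoC t * (b - a))%C).
    assert (Ew : (a + RtoC (t + h) * (b - a))%C = (z + RtoC h * (b - a))%C) by (unfold z; rewrite RtoC_plus; ring).
    rewrite Ew. unfold sfun. fold z.
    assert (Hdist : Cmod (z + RtoC h * (b - a) - z) = Rabs h * Cmod (b - a)).
    { replace (z + RtoC h * (b - a) - z)%C with (RtoC h * (b - a))%C by ring. apply Cmod_RtoC_mult. }
    assert (H1 : Cmod (z + RtoC h * (b - a) - z) < d).
    { rewrite Hdist. apply Rmult_lt_compat_r with (r := K) in Hh; auto.
      unfold Rdiv in Hh. rewrite Rmult_assoc, Rinv_l in Hh by lra.
      unfold K in Hh. pose proof (Cmod_ge_0 (b - a)). pose proof (Rabs_pos h). nra. }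
    specialize (Hw _ H1).
    replace (P (z + RtoC h * (b - a)) - P z - RtoC h * (p z * (b - a)))%C
      with (P (z + RtoC h * (b - a)) - P z - p z * (z + RtoC h * (b - a) - z))%C by ring.
    eapply Rle_trans; [exact Hw|]. fold z. rewrite Hdist.
    unfold K. pose proof (Cmod_ge_0 (b - a)). pose proof (Rabs_pos h).
    assert (eps / (Cmod (b - a) + 1) * (Cmod (b - a)) <= eps).
    { unfold Rdiv. rewrite Rmult_assoc. 
      assert (/ (Cmod (b - a) + 1) * Cmod (b - a) <= 1).
      { apply Rmult_le_reg_l with (r := Cmod (b - a) + 1); [lra|].
        rewrite <- Rmult_assoc, Rinv_r by lra. lra. }
      nra. }
    nra.
  - intros t Ht. rewrite Rmin_left, Rmax_right in Ht by lra.
    apply sfun_cont. apply Hp. exact Ht.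
Qed.

Lemma seg_plus (f g : C -> C) (a b : C) :
  ex_RInt (V:=CR) (sfun f a b) 0 1 -> ex_RInt (V:=CR) (sfun g a b) 0 1 ->
  segI (fun w => f w + g w)%C a b = (segI f a b + segI g a b)%C.
Proof.
  intros Hf Hg. unfold segI. apply (is_RInt_unique (V:=CR)).
  apply (RInt_correct (V:=CR)) in Hf. apply (RInt_correct (V:=CR)) in Hg.
  pose proof (is_RInt_plus (V:=CR) _ _ _ _ _ _ Hf Hg) as H.
  eapply is_RInt_ext; [|exact H]. intros x _. unfold sfun. simpl. unfold plus; simpl.
  destruct (f (a + RtoC x * (b - a))%C), (g (a + RtoC x * (b - a))%C), a, b.
  apply injective_projections; simpl; unfold plus; simpl; ring.
Qed.

Lemma C2_neq0 : (RtoC 2 <> 0)%C.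
Proof. intros H. injection H. lra. Qed.

Definition Jt (u : C -> C) (a b c : C) : C := (segI u a b + segI u b c + segI u c a)%C.

Lemma cdiff_affine (A l z : C) : cdiff (fun w => A * w + l * w * w / 2)%C z (A + l * z)%C.
Proof.
  intros eps He. exists (2 * eps / (Cmod l + 1)). split.
  { apply Rdiv_lt_0_compat; [lra|]. pose proof (Cmod_ge_0 l); lra. }
  intros w Hw.
  replace (A * w + l * w * w / 2 - (A * z + l * z * z / 2) - (A + l * z) * (w - z))%C
    with (l / 2 * ((w - z) * (w - z)))%C by (field; exact C2_neq0).
  rewrite !Cmod_mult. rewrite Cmod_div by exact C2_neq0.
  rewrite Cmod_R, Rabs_right by lra.
  pose proof (Cmod_ge_0 l). pose proof (Cmod_ge_0 (w - z)).
  assert (Cmod l * Cmod (w - z) <= 2 * eps).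
  { apply Rlt_le in Hw. apply Rmult_le_compat_r with (r := Cmod l + 1) in Hw; [|lra].
    unfold Rdiv in Hw. rewrite Rmult_assoc, Rinv_l in Hw by lra. nra. }
  unfold Rdiv. nra.
Qed.

Lemma ucont_affine (A l z : C) : ucont (fun w => A + l * w)%C z.
Proof.
  intros eps He. exists (eps / (Cmod l + 1)). split.
  { apply Rdiv_lt_0_compat; auto. pose proof (Cmod_ge_0 l); lra. }
  intros w Hw. replace (A + l * w - (A + l * z))%C with (l * (w - z))%C by ring.
  rewrite Cmod_mult. pose proof (Cmod_ge_0 l). pose proof (Cmod_ge_0 (w - z)).
  apply Rmult_lt_compat_r with (r := Cmod l + 1) in Hw; [|lra].
  unfold Rdiv in Hw. rewrite Rmult_assoc, Rinv_l in Hw by lra. nra.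
Qed.

Lemma Jt_affine (A l a b c : C) : Jt (fun w => A + l * w)%C a b c = 0%C.
Proof.
  unfold Jt. set (P := (fun w => A * w + l * w * w / 2)%C).
  assert (H : forall p q, segI (fun w => A + l * w)%C p q = (P q - P p)%C).
  { intros p q. apply seg_ftc.
    - intros t _. apply cdiff_affine.
    - intros t _. apply ucont_affine. }
  rewrite !H. ring.
Qed.

Definition tri := (C * C * C)%type.
Definition JT (u : C -> C) (T : tri) : C := let '(a, b, c) := T in Jt u a b c.
Definition per (T : tri) : R := let '(a, b, c) := T in Cmod (b - a) + Cmod (c - b) + Cmod (a - c).
Definition inD (rho : R) (T : tri) : Prop := let '(a, b, c) := T in Cmod a <= rho /\ Cmod b <= rho /\ Cmod c <= rho.
Definition fv (T : tri) : C := let '(a, _, _) := T in a.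
Definition sub (T : tri) (i : nat) : tri :=
  let '(a, b, c) := T in
  match i with
  | O => (a, mid a b, mid c a)
  | 1%nat => (mid a b, b, mid b c)
  | 2%nat => (mid c a, mid b c, c)
  | _ => (mid a b, mid b c, mid c a)
  end.

Lemma ucont_sub (f g : C -> C) (z : C) : ucont f z -> ucont g z -> ucont (fun w => f w - g w)%C z.
Proof.
  intros Hf Hg eps He.
  destruct (Hf (eps / 2)) as [d1 [Hd1 H1]]; [lra|].
  destruct (Hg (eps / 2)) as [d2 [Hd2 H2]]; [lra|].
  exists (Rmin d1 d2). split; [apply Rmin_pos; auto|].
  intros w Hw. 
  assert (Hw1 : Cmod (w - z) < d1) by (eapply Rlt_le_trans; [exact Hw|apply Rmin_l]).
  assert (Hw2 : Cmod (w - z) < d2) by (eapply Rlt_le_trans; [exact Hw|apply Rmin_r]).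
  specialize (H1 w Hw1). specialize (H2 w Hw2).
  replace (f w - g w - (f z - g z))%C with ((f w - f z) + - (g w - g z))%C by ring.
  eapply Rle_lt_trans; [apply Cmod_triangle|]. rewrite Cmod_opp. lra.
Qed.

Lemma mid_in (a b : C) (rho : R) : Cmod a <= rho -> Cmod b <= rho -> Cmod (mid a b) <= rho.
Proof. intros. rewrite mid_eq. apply convex_cdisk; auto; lra. Qed.

Lemma Cmod_half (z : C) : Cmod (RtoC (1/2) * z) = Cmod z / 2.
Proof. rewrite Cmod_RtoC_mult. rewrite Rabs_right by lra. field. Qed.

Section Tri.
Variable u : C -> C.
Variable rho : R.
Hypothesis Hc : forall z, Cmod z <= rho -> ucont u z.

Lemma seg_ex_D (a b : C) : Cmod a <= rho -> Cmod b <= rho -> ex_RInt (V:=CR) (sfun u a b) 0 1.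
Proof. intros Ha Hb. apply seg_ex. intros t Ht. apply Hc. apply convex_cdisk; auto. Qed.

Lemma inD_sub (T : tri) (i : nat) : inD rho T -> inD rho (sub T i).
Proof.
  destruct T as [[a b] c]. simpl. intros [Ha [Hb Hcc]].
  destruct i as [|[|[|i]]]; simpl; repeat split; auto; apply mid_in; auto.
Qed.

Lemma JT_sub (T : tri) : inD rho T ->
  JT u T = (JT u (sub T 0) + JT u (sub T 1) + JT u (sub T 2) + JT u (sub T 3))%C.
Proof.
  destruct T as [[a b] c]. simpl. intros [Ha [Hb Hcc]]. unfold Jt.
  pose proof (mid_in a b rho Ha Hb) as Hab.
  pose proof (mid_in b c rho Hb Hcc) as Hbc.
  pose proof (mid_in c a rho Hcc Ha) as Hca.
  rewrite (seg_split u a b) by (apply seg_ex_D; auto).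
  rewrite (seg_split u b c) by (apply seg_ex_D; auto).
  rewrite (seg_split u c a) by (apply seg_ex_D; auto).
  rewrite (seg_swap u (mid a b) (mid c a)) by (apply seg_ex_D; auto).
  rewrite (seg_swap u (mid b c) (mid a b)) by (apply seg_ex_D; auto).
  rewrite (seg_swap u (mid c a) (mid b c)) by (apply seg_ex_D; auto).
  ring.
Qed.

End Tri.

Lemma per_sub (T : tri) (i : nat) : per (sub T i) = per T / 2.
Proof.
  destruct T as [[a b] c]. unfold per, sub.
  assert (E1 : forall x y : C, (mid x y - x)%C = (RtoC (1/2) * (y - x))%C) by (intros [] []; unfold mid; ceq).
  assert (E2 : forall x y : C, (y - mid x y)%C = (RtoC (1/2) * (y - x))%C) by (intros [] []; unfold mid; ceq).
  assert (E3 : forall x y z : C, (mid z x - mid x y)%C = (RtoC (1/2) * (z - y))%C) by (intros [] [] []; unfold mid; ceq).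
  destruct i as [|[|[|i]]].
  - rewrite E1. rewrite (E3 a b c). replace (a - mid c a)%C with (RtoC (1/2) * (a - c))%C by (destruct a, c; unfold mid; ceq).
    rewrite !Cmod_half. field.
  - rewrite E2. replace (mid b c - b)%C with (RtoC (1/2) * (c - b))%C by (destruct b, c; unfold mid; ceq).
    replace (mid a b - mid b c)%C with (RtoC (1/2) * (a - c))%C by (destruct a, b, c; unfold mid; ceq).
    rewrite !Cmod_half. field.
  - replace (mid b c - mid c a)%C with (RtoC (1/2) * (b - a))%C by (destruct a, b, c; unfold mid; ceq).
    replace (c - mid b c)%C with (RtoC (1/2) * (c - b))%C by (destruct b, c; unfold mid; ceq).
    replace (mid c a - c)%C with (RtoC (1/2) * (a - c))%C by (destruct a, c; unfold mid; ceq).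
    rewrite !Cmod_half. field.
  - replace (mid b c - mid a b)%C with (RtoC (1/2) * (c - a))%C by (destruct a, b, c; unfold mid; ceq).
    replace (mid c a - mid b c)%C with (RtoC (1/2) * (a - b))%C by (destruct a, b, c; unfold mid; ceq).
    replace (mid a b - mid c a)%C with (RtoC (1/2) * (b - c))%C by (destruct a, b, c; unfold mid; ceq).
    rewrite !Cmod_half. rewrite (Cmod_sub_sym c a), (Cmod_sub_sym a b), (Cmod_sub_sym b c). field.
Qed.

Lemma per_nonneg (T : tri) : 0 <= per T.
Proof. destruct T as [[a b] c]. simpl. pose proof (Cmod_ge_0 (b - a)). pose proof (Cmod_ge_0 (c - b)). pose proof (Cmod_ge_0 (a - c)). lra. Qed.

Lemma fv_sub (T : tri) (i : nat) : Cmod (fv (sub T i) - fv T) <= per T.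
Proof.
  destruct T as [[a b] c]. unfold fv, sub, per.
  pose proof (Cmod_ge_0 (b - a)). pose proof (Cmod_ge_0 (c - b)). pose proof (Cmod_ge_0 (a - c)).
  destruct i as [|[|[|i]]].
  - replace (a - a)%C with (RtoC 0) by ring. rewrite Cmod_0. lra.
  - replace (mid a b - a)%C with (RtoC (1/2) * (b - a))%C by (destruct a, b; unfold mid; ceq). rewrite Cmod_half. lra.
  - replace (mid c a - a)%C with (RtoC (1/2) * (c - a))%C by (destruct a, c; unfold mid; ceq). rewrite Cmod_half.
    rewrite Cmod_sub_sym. lra.
  - replace (mid a b - a)%C with (RtoC (1/2) * (b - a))%C by (destruct a, b; unfold mid; ceq). rewrite Cmod_half. lra.
Qed.

Lemma edge_pts (T : tri) (t : R) : 0 <= t <= 1 ->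
  let '(a, b, c) := T in
  Cmod (a + RtoC t * (b - a) - a) <= per T /\ Cmod (b + RtoC t * (c - b) - a) <= per T /\
  Cmod (c + RtoC t * (a - c) - a) <= per T.
Proof.
  intros Ht. destruct T as [[a b] c]. unfold per.
  pose proof (Cmod_ge_0 (b - a)). pose proof (Cmod_ge_0 (c - b)). pose proof (Cmod_ge_0 (a - c)).
  pose proof (Rabs_right t ltac:(lra)) as Rt.
  repeat split.
  - replace (a + RtoC t * (b - a) - a)%C with (RtoC t * (b - a))%C by ring.
    rewrite Cmod_RtoC_mult, Rt. nra.
  - replace (b + RtoC t * (c - b) - a)%C with ((b - a) + RtoC t * (c - b))%C by ring.
    eapply Rle_trans; [apply Cmod_triangle|]. rewrite Cmod_RtoC_mult, Rt. nra.
  - replace (c + RtoC t * (a - c) - a)%C with (RtoC (1 - t) * (c - a))%C by (rewrite RtoC_minus; ring).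
    rewrite Cmod_RtoC_mult, Rabs_right by lra. rewrite (Cmod_sub_sym c a). nra.
Qed.

Definition step (u : C -> C) (T : tri) : tri :=
  if Rle_dec (Cmod (JT u T) / 4) (Cmod (JT u (sub T 0))) then sub T 0 else
  if Rle_dec (Cmod (JT u T) / 4) (Cmod (JT u (sub T 1))) then sub T 1 else
  if Rle_dec (Cmod (JT u T) / 4) (Cmod (JT u (sub T 2))) then sub T 2 else sub T 3.

Lemma step_sub (u : C -> C) (T : tri) : exists i, step u T = sub T i.
Proof.
  unfold step. destruct Rle_dec; [eauto|]. destruct Rle_dec; [eauto|]. destruct Rle_dec; eauto.
Qed.

Lemma step_J (u : C -> C) (rho : R) (Hc : forall z, Cmod z <= rho -> ucont u z) (T : tri) :
  inD rho T -> Cmod (JT u T) <= 4 * Cmod (JT u (step u T)).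
Proof.
  intros HT. unfold step.
  destruct Rle_dec as [H0|H0]; [lra|].
  destruct Rle_dec as [H1|H1]; [lra|].
  destruct Rle_dec as [H2|H2]; [lra|].
  destruct (Rle_dec (Cmod (JT u T) / 4) (Cmod (JT u (sub T 3)))) as [H3|H3]; [lra|].
  exfalso.
  rewrite (JT_sub u rho Hc T HT) in H0, H1, H2, H3.
  set (S := (JT u (sub T 0) + JT u (sub T 1) + JT u (sub T 2) + JT u (sub T 3))%C) in *.
  assert (Cmod S <= Cmod (JT u (sub T 0)) + Cmod (JT u (sub T 1)) + Cmod (JT u (sub T 2)) + Cmod (JT u (sub T 3))).
  { unfold S. eapply Rle_trans; [apply Cmod_triangle|].
    eapply Rle_trans; [apply Rplus_le_compat_r; apply Cmod_triangle|].
    eapply Rle_trans; [apply Rplus_le_compat_r; apply Rplus_le_compat_r; apply Cmod_triangle|]. lra. }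
  lra.
Qed.

Fixpoint seqT (u : C -> C) (T : tri) (k : nat) : tri :=
  match k with O => T | S k' => step u (seqT u T k') end.

Lemma segI_ext (f g : C -> C) (a b : C) : (forall w, f w = g w) -> segI f a b = segI g a b.
Proof.
  intros H. unfold segI. apply (RInt_ext (V:=CR)). intros x _. unfold sfun. rewrite H. reflexivity.
Qed.

Theorem goursat (u : C -> C) (rho : R) :
  (forall z, Cmod z <= rho -> exists l, cdiff u z l) ->
  forall a b c, Cmod a <= rho -> Cmod b <= rho -> Cmod c <= rho -> Jt u a b c = 0%C.
Proof.
  intros Hd a b c Ha Hb Hcc.
  assert (Hc : forall z, Cmod z <= rho -> ucont u z).
  { intros z Hz. destruct (Hd z Hz) as [l Hl]. intros eps He. apply (cdiff_cont u z l Hl eps He). }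
  set (T0 := (a, b, c) : tri).
  set (P := per T0).
  assert (HP : 0 <= P) by apply per_nonneg.
  set (Tk := seqT u T0).
  assert (Hin : forall k, inD rho (Tk k)).
  { induction k; simpl. - unfold T0; simpl; auto.
    - destruct (step_sub u (Tk k)) as [i Hi]. unfold Tk in *. simpl. rewrite Hi. apply inD_sub; auto. }
  assert (Hper : forall k, per (Tk k) = P / 2 ^ k).
  { induction k. - simpl pow. unfold Rdiv. rewrite Rinv_1, Rmult_1_r. reflexivity.
    - destruct (step_sub u (Tk k)) as [i Hi]. unfold Tk in *. simpl. rewrite Hi, per_sub, IHk.
      field. pose proof (pow2_pos k). lra. }
  assert (HJ : forall k, Cmod (JT u T0) <= (2 ^ k) ^ 2 * Cmod (JT u (Tk k))).
  { induction k. - simpl. lra.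
    - pose proof (step_J u rho Hc (Tk k) (Hin k)) as Hs.
      change (Tk (S k)) with (step u (Tk k)).
      pose proof (pow2_pos k) as Hp.
      set (X := Cmod (JT u T0)) in *. set (Z := Cmod (JT u (Tk k))) in *.
      set (Y := Cmod (JT u (step u (Tk k)))) in *.
      change (2 ^ S k) with (2 * 2 ^ k).
      set (p := 2 ^ k) in *.
      assert (p ^ 2 * Z <= p ^ 2 * (4 * Y)) by (apply Rmult_le_compat_l; [nra|lra]).
      nra. }
  assert (Hfv : forall k, Cmod (fv (Tk (S k)) - fv (Tk k)) <= P / 2 ^ k).
  { intros k. destruct (step_sub u (Tk k)) as [i Hi]. unfold Tk in *. simpl. rewrite Hi.
    rewrite <- Hper. apply fv_sub. }
  destruct (geom_limit (fun k => fst (fv (Tk k))) P HP) as [Lx HLx].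
  { intros k. eapply Rle_trans; [|apply (Hfv k)].
    pose proof (Cmod_re (fv (Tk (S k)) - fv (Tk k))%C). destruct (fv (Tk (S k))), (fv (Tk k)). simpl in *.
    replace (r - r1) with (r + - r1) by ring. exact H. }
  destruct (geom_limit (fun k => snd (fv (Tk k))) P HP) as [Ly HLy].
  { intros k. eapply Rle_trans; [|apply (Hfv k)].
    pose proof (Cmod_im (fv (Tk (S k)) - fv (Tk k))%C). destruct (fv (Tk (S k))), (fv (Tk k)). simpl in *.
    replace (r0 - r2) with (r0 + - r2) by ring. exact H. }
  set (zs := (Lx, Ly) : C).
  assert (Hzs : forall k, Cmod (fv (Tk k) - zs) <= 4 * P / 2 ^ k).
  { intros k. eapply Rle_trans; [apply Cmod_le_sum|].
    specialize (HLx k). specialize (HLy k). simpl in HLx, HLy.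
    destruct (fv (Tk k)). simpl in *. unfold zs; simpl.
    replace (r + - Lx) with (r - Lx) by ring. replace (r0 + - Ly) with (r0 - Ly) by ring.
    replace (4 * P / 2 ^ k) with (2 * P / 2 ^ k + 2 * P / 2 ^ k) by (unfold Rdiv; ring).
    lra. }
  assert (Hzin : Cmod zs <= rho).
  { destruct (Rle_dec (Cmod zs) rho) as [|Hn]; auto. exfalso. apply Rnot_le_lt in Hn.
    destruct (small_pow2 (4 * P) (Cmod zs - rho)) as [k Hk]; [lra|].
    specialize (Hzs k). 
    assert (Cmod zs <= Cmod (fv (Tk k)) + Cmod (fv (Tk k) - zs)).
    { replace zs with (fv (Tk k) + - (fv (Tk k) - zs))%C at 1 by ring.
      eapply Rle_trans; [apply Cmod_triangle|]. rewrite Cmod_opp. lra. }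
    assert (Cmod (fv (Tk k)) <= rho).
    { pose proof (Hin k). destruct (Tk k) as [[p q] r]. simpl in *. tauto. }
    lra. }
  destruct (Hd zs Hzin) as [l Hl].
  destruct (Req_dec (Cmod (JT u T0)) 0) as [Hz|Hnz].
  { apply Cmod_eq_0 in Hz. exact Hz. }
  exfalso.
  set (c0 := Cmod (JT u T0)).
  assert (Hc0 : 0 < c0) by (pose proof (Cmod_ge_0 (JT u T0)); unfold c0; lra).
  set (eps := c0 / (5 * P ^ 2 + 1)).
  assert (Heps : 0 < eps) by (unfold eps; apply Rdiv_lt_0_compat; auto; nra).
  destruct (Hl eps Heps) as [del [Hdel Hdl]].
  destruct (small_pow2 (5 * P) del Hdel) as [k Hk].
  set (Pk := P / 2 ^ k).
  assert (HPk : 0 <= Pk) by (unfold Pk; apply Rmult_le_pos; auto; left; apply Rinv_0_lt_compat, pow2_pos).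
  set (v := (fun w => (u zs - l * zs) + l * w)%C).
  set (e := (fun w => u w - v w)%C).
  assert (He : forall w, Cmod (w - fv (Tk k)) <= Pk -> Cmod (e w) <= eps * (5 * Pk)).
  { intros w Hw. 
    assert (Hwz : Cmod (w - zs) <= 5 * Pk).
    { replace (w - zs)%C with ((w - fv (Tk k)) + (fv (Tk k) - zs))%C by ring.
      eapply Rle_trans; [apply Cmod_triangle|]. specialize (Hzs k).
      unfold Pk. unfold Pk in Hw. replace (4 * P / 2 ^ k) with (4 * (P / 2 ^ k)) in Hzs by (unfold Rdiv; ring). lra. }
    assert (Hwz2 : Cmod (w - zs) < del).
    { eapply Rle_lt_trans; [exact Hwz|]. unfold Pk. replace (5 * (P / 2 ^ k)) with (5 * P / 2 ^ k) by (unfold Rdiv; ring). exact Hk. }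
    specialize (Hdl w Hwz2).
    unfold e, v. replace (u w - (u zs - l * zs + l * w))%C with (u w - u zs - l * (w - zs))%C by ring.
    eapply Rle_trans; [exact Hdl|]. apply Rmult_le_compat_l; lra. }
  pose proof (Hin k) as HinK. pose proof (Hper k) as HperK. pose proof (HJ k) as HJK.
  pose proof (fun t Ht => edge_pts (Tk k) t Ht) as Hedge.
  destruct (Tk k) as [[p q] r]. simpl in HinK, HperK, HJK, Hedge, He.
  destruct HinK as [Hp [Hq Hr]].
  assert (Hvc : forall z, ucont v z) by (intros; apply ucont_affine).
  assert (Hec : forall z, Cmod z <= rho -> ucont e z) by (intros; apply ucont_sub; auto).
  assert (Hsplit : forall x y, Cmod x <= rho -> Cmod y <= rho -> segI u x y = (segI e x y + segI v x y)%C).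
  { intros x y Hx Hy. rewrite <- seg_plus.
    - apply segI_ext. intros w. unfold e. ring.
    - apply seg_ex. intros t Ht. apply Hec. apply convex_cdisk; auto.
    - apply seg_ex. intros t Ht. apply Hvc. }
  assert (HJe : Jt u p q r = Jt e p q r).
  { unfold Jt. rewrite (Hsplit p q), (Hsplit q r), (Hsplit r p) by auto.
    pose proof (Jt_affine (u zs - l * zs)%C l p q r) as H0. unfold Jt in H0. fold v in H0.
    replace (segI e p q + segI v p q + (segI e q r + segI v q r) + (segI e r p + segI v r p))%C
      with (segI e p q + segI e q r + segI e r p + (segI v p q + segI v q r + segI v r p))%C by ring.
    rewrite H0. ring. }
  assert (Hbnd : forall x y, Cmod x <= rho -> Cmod y <= rho ->
            (forall t, 0 <= t <= 1 -> Cmod (x + RtoC t * (y - x) - p) <= Pk) ->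
            Cmod (segI e x y) <= eps * (5 * Pk) * Cmod (y - x)).
  { intros x y Hx Hy Hxy. apply seg_bound.
    - apply seg_ex. intros t Ht. apply Hec. apply convex_cdisk; auto.
    - intros t Ht. apply He. apply Hxy. auto. }
  assert (HJb : Cmod (Jt e p q r) <= eps * (5 * Pk) * Pk).
  { unfold Jt. 
    assert (Hsum : Cmod (q - p) + Cmod (r - q) + Cmod (p - r) = Pk) by (unfold Pk; exact HperK).
    replace (eps * (5 * Pk) * Pk) with (eps * (5 * Pk) * Cmod (q - p) + eps * (5 * Pk) * Cmod (r - q) + eps * (5 * Pk) * Cmod (p - r)) by (rewrite <- Hsum; ring).
    rewrite Hsum in Hedge.
    eapply Rle_trans; [apply Cmod_triangle|].
    eapply Rle_trans; [apply Rplus_le_compat_r; apply Cmod_triangle|].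
    assert (H1 := Hbnd p q Hp Hq (fun t Ht => proj1 (Hedge t Ht))).
    assert (H2 := Hbnd q r Hq Hr (fun t Ht => proj1 (proj2 (Hedge t Ht)))).
    assert (H3 := Hbnd r p Hr Hp (fun t Ht => proj2 (proj2 (Hedge t Ht)))).
    lra. }
  rewrite HJe in HJK.
  assert (Hfin : c0 <= 5 * eps * P ^ 2).
  { fold c0 in HJK. eapply Rle_trans; [exact HJK|].
    pose proof (pow2_pos k).
    assert (E : (2 ^ k) ^ 2 * (eps * (5 * Pk) * Pk) = 5 * eps * P ^ 2).
    { unfold Pk. field. lra. }
    rewrite <- E. apply Rmult_le_compat_l; [nra|]. exact HJb. }
  assert (5 * eps * P ^ 2 < c0).
  { unfold eps. apply Rmult_lt_reg_r with (r := 5 * P ^ 2 + 1); [nra|].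
    replace (5 * (c0 / (5 * P ^ 2 + 1)) * P ^ 2 * (5 * P ^ 2 + 1)) with (5 * P ^ 2 * c0) by (field; nra).
    nra. }
  lra.
Qed.

Lemma segI_const (K z w : C) : segI (fun _ => K) z w = (K * (w - z))%C.
Proof.
  rewrite (seg_ftc (fun x => K * x)%C (fun _ => K)).
  - ring.
  - intros t _ eps He. exists 1. split; [lra|]. intros x _.
    replace (K * x - K * (z + RtoC t * (w - z)) - K * (x - (z + RtoC t * (w - z))))%C with (RtoC 0) by ring.
    rewrite Cmod_0. pose proof (Cmod_ge_0 (x - (z + RtoC t * (w - z)))). nra.
  - intros t _ eps He. exists 1. split; [lra|]. intros x _.
    replace (K - K)%C with (RtoC 0) by ring. rewrite Cmod_0. lra.
Qed.

Section Prim.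
Variable u : C -> C.
Variable rho : R.
Hypothesis Hd : forall z, Cmod z <= rho -> exists l, cdiff u z l.

Definition Fp (z : C) : C := segI u 0 z.

Lemma Hc_prim : forall z, Cmod z <= rho -> ucont u z.
Proof. intros z Hz. destruct (Hd z Hz) as [l Hl]. intros eps He. apply (cdiff_cont u z l Hl eps He). Qed.

Lemma Fp_diff (a b : C) : Cmod a <= rho -> Cmod b <= rho -> (Fp b - Fp a)%C = segI u a b.
Proof.
  intros Ha Hb. unfold Fp.
  assert (H0 : Cmod (RtoC 0) <= rho) by (rewrite Cmod_0; pose proof (Cmod_ge_0 a); lra).
  pose proof (goursat u rho Hd 0 a b H0 Ha Hb) as G. unfold Jt in G.
  rewrite (seg_swap u 0 b) in G by (apply (seg_ex_D u rho Hc_prim); auto).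
  apply Ceq_minus.
  replace (segI u 0 b - segI u 0 a - segI u a b)%C with (- (segI u 0 a + segI u a b + - segI u 0 b))%C by ring.
  rewrite G. ring.
Qed.

Lemma Fp_lip (a b : C) (M : R) : Cmod a <= rho -> Cmod b <= rho ->
  (forall z, Cmod z <= rho -> Cmod (u z) <= M) -> Cmod (Fp b - Fp a) <= M * Cmod (b - a).
Proof.
  intros Ha Hb HM. rewrite Fp_diff by auto. apply seg_bound.
  - apply (seg_ex_D u rho Hc_prim); auto.
  - intros t Ht. apply HM. apply convex_cdisk; auto.
Qed.

Lemma Fp_cdiff (z : C) : Cmod z < rho -> cdiff Fp z (u z).
Proof.
  intros Hz eps He.
  destruct (Hc_prim z (Rlt_le _ _ Hz) (eps / 2)) as [d [Hdp Hdz]]; [lra|].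
  exists (Rmin d (rho - Cmod z)). split; [apply Rmin_pos; lra|].
  intros w Hw.
  assert (Hw1 : Cmod (w - z) < d) by (eapply Rlt_le_trans; [exact Hw|apply Rmin_l]).
  assert (Hw2 : Cmod (w - z) < rho - Cmod z) by (eapply Rlt_le_trans; [exact Hw|apply Rmin_r]).
  assert (Hwr : Cmod w <= rho).
  { replace w with (z + (w - z))%C by ring. eapply Rle_trans; [apply Cmod_triangle|]. lra. }
  rewrite Fp_diff by lra.
  rewrite <- (segI_const (u z) z w).
  assert (E : (segI u z w - segI (fun _ => u z) z w)%C = segI (fun x => u x - u z)%C z w).
  { set (g := fun _ : C => (- u z)%C).
    assert (E1 : segI (fun x => u x - u z)%C z w = segI (fun x => u x + g x)%C z w)
      by (apply segI_ext; intros; unfold g; ring).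
    rewrite E1. rewrite seg_plus. unfold g.
    - rewrite (segI_const (- u z)%C z w), (segI_const (u z) z w). ring.
    - apply (seg_ex_D u rho Hc_prim); lra.
    - apply seg_ex. intros t _ e' He'. exists 1. split; [lra|]. intros. unfold g.
      replace (- u z - - u z)%C with (RtoC 0) by ring.
      rewrite Cmod_0. lra. }
  rewrite E.
  eapply Rle_trans.
  - apply seg_bound with (M := eps / 2).
    + apply seg_ex. intros t Ht. apply ucont_sub. 
      * apply Hc_prim. apply convex_cdisk; lra.
      * intros e' He'. exists 1. split; [lra|]. intros. replace (u z - u z)%C with (RtoC 0) by ring. rewrite Cmod_0. lra.
    + intros t Ht. left. apply Hdz.
      replace (z + RtoC t * (w - z) - z)%C with (RtoC t * (w - z))%C by ring.
      rewrite Cmod_RtoC_mult, Rabs_right by lra. pose proof (Cmod_ge_0 (w - z)). nra.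
  - pose proof (Cmod_ge_0 (w - z)). nra.
Qed.

End Prim.

Definition rcont (g : R -> C) (t : R) := forall eps, 0 < eps -> exists del, 0 < del /\
  forall s, Rabs (s - t) < del -> Cmod (g s - g t) < eps.
Definition deps (g : R -> C) (t : R) (d : C) := forall eps, 0 < eps -> exists del, 0 < del /\
  forall h, Rabs h < del -> Cmod (g (t + h) - g t - RtoC h * d) <= eps * Rabs h.

Lemma rcont_continuous (g : R -> C) (t : R) : rcont g t -> @continuous R_UniformSpace CR g t.
Proof. intros H. apply continuous_CR. exact H. Qed.

Lemma deps_is_derive (g : R -> C) (t : R) (d : C) : deps g t d -> @is_derive R_AbsRing CR g t d.
Proof. intros H. apply is_derive_CR. exact H. Qed.

Lemma deps_rcont (g : R -> C) (t : R) (d : C) : deps g t d -> rcont g t.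
Proof.
  intros H eps He. destruct (H 1 Rlt_0_1) as [del [Hdel Hh]].
  exists (Rmin del (eps / (Cmod d + 2))). split.
  { apply Rmin_pos; auto. apply Rdiv_lt_0_compat; auto. pose proof (Cmod_ge_0 d); lra. }
  intros s Hs. 
  assert (H1 : Rabs (s - t) < del) by (eapply Rlt_le_trans; [exact Hs|apply Rmin_l]).
  assert (H2 : Rabs (s - t) < eps / (Cmod d + 2)) by (eapply Rlt_le_trans; [exact Hs|apply Rmin_r]).
  specialize (Hh (s - t) H1). replace (t + (s - t)) with s in Hh by ring.
  replace (g s - g t)%C with ((g s - g t - RtoC (s - t) * d) + RtoC (s - t) * d)%C by ring.
  eapply Rle_lt_trans; [apply Cmod_triangle|]. rewrite Cmod_RtoC_mult.
  pose proof (Cmod_ge_0 d). pose proof (Rabs_pos (s - t)).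
  apply Rmult_lt_compat_r with (r := Cmod d + 2) in H2; [|lra].
  unfold Rdiv in H2. rewrite Rmult_assoc, Rinv_l in H2 by lra. nra.
Qed.

Lemma rcont_comp (F : C -> C) (g : R -> C) (t : R) : ucont F (g t) -> rcont g t -> rcont (fun s => F (g s)) t.
Proof.
  intros HF Hg eps He. destruct (HF eps He) as [d1 [Hd1 H1]].
  destruct (Hg d1 Hd1) as [d2 [Hd2 H2]]. exists d2. split; auto.
Qed.

Lemma rcont_plus (f g : R -> C) (t : R) : rcont f t -> rcont g t -> rcont (fun s => f s + g s)%C t.
Proof.
  intros Hf Hg eps He.
  destruct (Hf (eps / 2)) as [d1 [Hd1 H1]]; [lra|].
  destruct (Hg (eps / 2)) as [d2 [Hd2 H2]]; [lra|].
  exists (Rmin d1 d2). split; [apply Rmin_pos; auto|].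
  intros s Hs.
  assert (Hs1 : Rabs (s - t) < d1) by (eapply Rlt_le_trans; [exact Hs|apply Rmin_l]).
  assert (Hs2 : Rabs (s - t) < d2) by (eapply Rlt_le_trans; [exact Hs|apply Rmin_r]).
  specialize (H1 s Hs1). specialize (H2 s Hs2).
  replace (f s + g s - (f t + g t))%C with ((f s - f t) + (g s - g t))%C by ring.
  eapply Rle_lt_trans; [apply Cmod_triangle|]. lra.
Qed.

Lemma rcont_mult (f g : R -> C) (t : R) : rcont f t -> rcont g t -> rcont (fun s => f s * g s)%C t.
Proof.
  intros Hf Hg eps He.
  set (Kf := Cmod (f t) + 1). set (Kg := Cmod (g t) + 1).
  assert (HKf : 0 < Kf) by (unfold Kf; pose proof (Cmod_ge_0 (f t)); lra).
  assert (HKg : 0 < Kg) by (unfold Kg; pose proof (Cmod_ge_0 (g t)); lra).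
  set (e1 := Rmin 1 (eps / (2 * Kg))).
  assert (He1 : 0 < e1) by (unfold e1; apply Rmin_pos; [lra|apply Rdiv_lt_0_compat; lra]).
  set (e2 := eps / (2 * (Kf + 1))).
  assert (He2 : 0 < e2) by (unfold e2; apply Rdiv_lt_0_compat; lra).
  destruct (Hf e1 He1) as [d1 [Hd1 H1]].
  destruct (Hg e2 He2) as [d2 [Hd2 H2]].
  exists (Rmin d1 d2). split; [apply Rmin_pos; auto|].
  intros s Hs.
  assert (Hs1 : Rabs (s - t) < d1) by (eapply Rlt_le_trans; [exact Hs|apply Rmin_l]).
  assert (Hs2 : Rabs (s - t) < d2) by (eapply Rlt_le_trans; [exact Hs|apply Rmin_r]).
  specialize (H1 s Hs1). specialize (H2 s Hs2).
  replace (f s * g s - f t * g t)%C with ((f s - f t) * g t + f s * (g s - g t))%C by ring.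
  eapply Rle_lt_trans; [apply Cmod_triangle|]. rewrite !Cmod_mult.
  assert (Hfs : Cmod (f s) <= Kf + 1).
  { replace (f s) with (f t + (f s - f t))%C by ring. eapply Rle_trans; [apply Cmod_triangle|].
    unfold Kf. assert (e1 <= 1) by apply Rmin_l. lra. }
  assert (Ha : Cmod (f s - f t) * Cmod (g t) <= eps / 2).
  { assert (e1 <= eps / (2 * Kg)) by apply Rmin_r.
    assert (Cmod (f s - f t) <= eps / (2 * Kg)) by lra.
    apply Rle_trans with (eps / (2 * Kg) * Kg).
    - apply Rmult_le_compat; try apply Cmod_ge_0; auto. unfold Kg; lra.
    - right. field. lra. }
  assert (Hb : Cmod (f s) * Cmod (g s - g t) < eps / 2).
  { apply Rle_lt_trans with ((Kf + 1) * Cmod (g s - g t)).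
    - apply Rmult_le_compat_r; [apply Cmod_ge_0|auto].
    - apply Rlt_le_trans with ((Kf + 1) * e2).
      + apply Rmult_lt_compat_l; lra.
      + right. unfold e2. field. lra. }
  lra.
Qed.

Lemma rcont_const (c : C) (t : R) : rcont (fun _ => c) t.
Proof. intros eps He. exists 1. split; [lra|]. intros. replace (c - c)%C with (RtoC 0) by ring. rewrite Cmod_0. lra. Qed.

Lemma deps_pair (f g : R -> R) (t f' g' : R) :
  derivable_pt_lim f t f' -> derivable_pt_lim g t g' -> deps (fun s => (f s, g s)) t (f', g').
Proof.
  intros Hf Hg eps He.
  destruct (Hf (eps / 2)) as [d1 Hd1]; [lra|].
  destruct (Hg (eps / 2)) as [d2 Hd2]; [lra|].
  exists (Rmin d1 d2). split; [apply Rmin_pos; apply cond_pos|].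
  intros h Hh.
  destruct (Req_dec h 0) as [H0|H0].
  { subst. rewrite Rplus_0_r. replace ((f t, g t) - (f t, g t) - RtoC 0 * (f', g'))%C with (RtoC 0) by ceq.
    rewrite Cmod_0, Rabs_R0. lra. }
  assert (Hh1 : Rabs h < d1) by (eapply Rlt_le_trans; [exact Hh|apply Rmin_l]).
  assert (Hh2 : Rabs h < d2) by (eapply Rlt_le_trans; [exact Hh|apply Rmin_r]).
  specialize (Hd1 h H0 Hh1). specialize (Hd2 h H0 Hh2).
  eapply Rle_trans; [apply Cmod_le_sum|]. simpl.
  assert (E : forall a b c k : R, Rabs ((a - b) / h - c) < eps / 2 -> Rabs (a + - b + - (h * c - 0 * k)) <= eps / 2 * Rabs h).
  { intros a b c k Habc. replace (a + - b + - (h * c - 0 * k)) with (h * ((a - b) / h - c)) by (field; auto).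
    rewrite Rabs_mult. pose proof (Rabs_pos h). nra. }
  assert (E' : forall a b c k : R, Rabs ((a - b) / h - c) < eps / 2 -> Rabs (a + - b + - (h * c + 0 * k)) <= eps / 2 * Rabs h).
  { intros a b c k Habc. replace (a + - b + - (h * c + 0 * k)) with (h * ((a - b) / h - c)) by (field; auto).
    rewrite Rabs_mult. pose proof (Rabs_pos h). nra. }
  pose proof (E _ _ _ g' Hd1). pose proof (E' _ _ _ f' Hd2). lra.
Qed.

Definition ee (th : R) : C := (cos th, sin th).
Definition eb (th : R) : C := (cos th, - sin th).

Lemma deps_ee (th : R) : deps ee th (Ci * ee th)%C.
Proof.
  replace (Ci * ee th)%C with ((- sin th, cos th) : C) by (unfold ee, Ci; ceq).
  apply deps_pair; [apply derivable_pt_lim_cos|apply derivable_pt_lim_sin].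
Qed.

Lemma deps_eb (th : R) : deps eb th (- Ci * eb th)%C.
Proof.
  replace (- Ci * eb th)%C with ((- sin th, - cos th) : C) by (unfold eb, Ci; ceq).
  apply deps_pair; [apply derivable_pt_lim_cos|].
  apply derivable_pt_lim_opp. apply derivable_pt_lim_sin.
Qed.

Lemma ee_eb (th : R) : (ee th * eb th)%C = RtoC 1.
Proof. unfold ee, eb. pose proof (sin2_cos2 th). unfold Rsqr in H. apply injective_projections; simpl; nra. Qed.

Lemma Cmod_ee (th : R) : Cmod (ee th) = 1.
Proof. unfold ee, Cmod; simpl. pose proof (sin2_cos2 th). unfold Rsqr in H. 
  replace (cos th * (cos th * 1) + sin th * (sin th * 1)) with 1 by lra. apply sqrt_1. Qed.

Lemma Cmod_eb (th : R) : Cmod (eb th) = 1.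
Proof. unfold eb, Cmod; simpl. pose proof (sin2_cos2 th). unfold Rsqr in H. 
  replace (cos th * (cos th * 1) + - sin th * (- sin th * 1)) with 1 by lra. apply sqrt_1. Qed.

Lemma deps_bound (g : R -> C) (t : R) (d : C) : deps g t d ->
  exists del, 0 < del /\ forall h, Rabs h < del -> Cmod (g (t + h)%R - g t) <= (Cmod d + 1) * Rabs h.
Proof.
  intros H. destruct (H 1 Rlt_0_1) as [del [Hdel Hh]]. exists del. split; auto.
  intros h Hh'. specialize (Hh h Hh').
  replace (g (t + h)%R - g t)%C with ((g (t + h)%R - g t - RtoC h * d) + RtoC h * d)%C by ring.
  eapply Rle_trans; [apply Cmod_triangle|]. rewrite Cmod_RtoC_mult. nra.
Qed.

Lemma deps_chain (F : C -> C) (f : C) (g : R -> C) (t : R) (d : C) :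
  cdiff F (g t) f -> deps g t d -> deps (fun s => F (g s)) t (f * d)%C.
Proof.
  intros HF Hg eps He.
  destruct (deps_bound g t d Hg) as [d1 [Hd1 Hb]].
  set (K := Cmod d + 1). assert (HK : 0 < K) by (unfold K; pose proof (Cmod_ge_0 d); lra).
  set (Kf := Cmod f + 1). assert (HKf : 0 < Kf) by (unfold Kf; pose proof (Cmod_ge_0 f); lra).
  destruct (HF (eps / (2 * K))) as [dF [HdF HFd]]. { apply Rdiv_lt_0_compat; lra. }
  destruct (Hg (eps / (2 * Kf))) as [d2 [Hd2 Hg2]]. { apply Rdiv_lt_0_compat; lra. }
  exists (Rmin d1 (Rmin d2 (dF / K))). split.
  { apply Rmin_pos; auto. apply Rmin_pos; auto. apply Rdiv_lt_0_compat; auto. }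
  intros h Hh.
  assert (Hh1 : Rabs h < d1) by (eapply Rlt_le_trans; [exact Hh|apply Rmin_l]).
  assert (Hh2 : Rabs h < d2) by (eapply Rlt_le_trans; [exact Hh|eapply Rle_trans; [apply Rmin_r|apply Rmin_l]]).
  assert (Hh3 : Rabs h < dF / K) by (eapply Rlt_le_trans; [exact Hh|eapply Rle_trans; [apply Rmin_r|apply Rmin_r]]).
  specialize (Hb h Hh1). fold K in Hb.
  assert (Hw : Cmod (g (t + h)%R - g t) < dF).
  { eapply Rle_lt_trans; [exact Hb|]. apply Rmult_lt_compat_l with (r := K) in Hh3; auto.
    unfold Rdiv in Hh3. rewrite <- Rmult_assoc, (Rmult_comm K dF), Rmult_assoc, Rinv_r, Rmult_1_r in Hh3 by lra. exact Hh3. }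
  specialize (HFd _ Hw). specialize (Hg2 h Hh2).
  replace (F (g (t + h)%R) - F (g t) - RtoC h * (f * d))%C
    with ((F (g (t + h)%R) - F (g t) - f * (g (t + h)%R - g t)) + f * (g (t + h)%R - g t - RtoC h * d))%C by ring.
  eapply Rle_trans; [apply Cmod_triangle|]. rewrite Cmod_mult.
  pose proof (Cmod_ge_0 f). pose proof (Rabs_pos h). pose proof (Cmod_ge_0 (g (t + h)%R - g t)).
  assert (A1 : eps / (2 * K) * Cmod (g (t + h)%R - g t) <= eps / 2 * Rabs h).
  { apply Rle_trans with (eps / (2 * K) * (K * Rabs h)).
    - apply Rmult_le_compat_l; [left; apply Rdiv_lt_0_compat; lra|exact Hb].
    - right. field. lra. }
  assert (A2 : Cmod f * Cmod (g (t + h)%R - g t - RtoC h * d) <= eps / 2 * Rabs h).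
  { apply Rle_trans with (Kf * (eps / (2 * Kf) * Rabs h)).
    - apply Rmult_le_compat; try apply Cmod_ge_0; auto. unfold Kf; lra.
    - right. field. lra. }
  lra.
Qed.

Lemma deps_mult (A B : R -> C) (t : R) (a b : C) :
  deps A t a -> deps B t b -> deps (fun s => A s * B s)%C t (a * B t + A t * b)%C.
Proof.
  intros HA HB eps He.
  destruct (deps_bound B t b HB) as [d0 [Hd0 HBb]].
  set (KB := Cmod (B t) + Cmod b + 2).
  assert (HKB : 0 < KB) by (unfold KB; pose proof (Cmod_ge_0 (B t)); pose proof (Cmod_ge_0 b); lra).
  set (KA := Cmod (A t) + 1). assert (HKA : 0 < KA) by (unfold KA; pose proof (Cmod_ge_0 (A t)); lra).
  set (Ka := Cmod a + 1). assert (HKa : 0 < Ka) by (unfold Ka; pose proof (Cmod_ge_0 a); lra).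
  destruct (HA (eps / (3 * KB))) as [d1 [Hd1 HA1]]. { apply Rdiv_lt_0_compat; lra. }
  destruct (HB (eps / (3 * KA))) as [d2 [Hd2 HB2]]. { apply Rdiv_lt_0_compat; lra. }
  set (d3 := eps / (3 * Ka * (Cmod b + 1))).
  assert (Hd3 : 0 < d3) by (unfold d3; apply Rdiv_lt_0_compat; [lra|]; pose proof (Cmod_ge_0 b); nra).
  exists (Rmin (Rmin d0 1) (Rmin d1 (Rmin d2 d3))). split.
  { repeat apply Rmin_pos; lra. }
  intros h Hh.
  assert (Hh0 : Rabs h < d0) by (eapply Rlt_le_trans; [exact Hh|]; eapply Rle_trans; [apply Rmin_l|apply Rmin_l]).
  assert (Hh01 : Rabs h < 1) by (eapply Rlt_le_trans; [exact Hh|]; eapply Rle_trans; [apply Rmin_l|apply Rmin_r]).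
  assert (Hh1 : Rabs h < d1) by (eapply Rlt_le_trans; [exact Hh|]; eapply Rle_trans; [apply Rmin_r|apply Rmin_l]).
  assert (Hh2 : Rabs h < d2) by (eapply Rlt_le_trans; [exact Hh|]; eapply Rle_trans; [apply Rmin_r|]; eapply Rle_trans; [apply Rmin_r|apply Rmin_l]).
  assert (Hh3 : Rabs h < d3) by (eapply Rlt_le_trans; [exact Hh|]; eapply Rle_trans; [apply Rmin_r|]; eapply Rle_trans; [apply Rmin_r|apply Rmin_r]).
  specialize (HBb h Hh0). specialize (HA1 h Hh1). specialize (HB2 h Hh2).
  replace (A (t + h)%R * B (t + h)%R - A t * B t - RtoC h * (a * B t + A t * b))%C
    with ((A (t + h)%R - A t - RtoC h * a) * B (t + h)%R + A t * (B (t + h)%R - B t - RtoC h * b)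
          + RtoC h * a * (B (t + h)%R - B t))%C by ring.
  pose proof (Rabs_pos h).
  assert (HBth : Cmod (B (t + h)%R) <= KB).
  { replace (B (t + h)%R) with (B t + (B (t + h)%R - B t))%C by ring. eapply Rle_trans; [apply Cmod_triangle|].
    unfold KB. pose proof (Cmod_ge_0 b). nra. }
  assert (T1 : Cmod ((A (t + h)%R - A t - RtoC h * a) * B (t + h)%R) <= eps / 3 * Rabs h).
  { rewrite Cmod_mult. apply Rle_trans with (eps / (3 * KB) * Rabs h * KB).
    - apply Rmult_le_compat; try apply Cmod_ge_0; auto.
    - right. field. lra. }
  assert (T2 : Cmod (A t * (B (t + h)%R - B t - RtoC h * b)) <= eps / 3 * Rabs h).
  { rewrite Cmod_mult. apply Rle_trans with (KA * (eps / (3 * KA) * Rabs h)).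
    - apply Rmult_le_compat; try apply Cmod_ge_0; auto. unfold KA; lra.
    - right. field. lra. }
  assert (T3 : Cmod (RtoC h * a * (B (t + h)%R - B t)) <= eps / 3 * Rabs h).
  { pose proof (Cmod_ge_0 a). pose proof (Cmod_ge_0 b).
    assert (X : Cmod (B (t + h)%R - B t) <= (Cmod b + 1) * d3) by nra.
    rewrite !Cmod_mult, Cmod_R.
    apply Rle_trans with (Rabs h * Ka * ((Cmod b + 1) * d3)).
    - apply Rmult_le_compat; [nra|apply Cmod_ge_0| |exact X].
      apply Rmult_le_compat_l; [auto| unfold Ka; lra].
    - right. unfold d3. field. split; [pose proof (Cmod_ge_0 b); lra | lra]. }
  eapply Rle_trans; [apply Cmod_triangle|].
  eapply Rle_trans; [apply Rplus_le_compat_r; apply Cmod_triangle|]. lra.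
Qed.

Lemma deps_affine (y s : C) (g : R -> C) (t : R) (d : C) :
  deps g t d -> deps (fun th => y + s * g th)%C t (s * d)%C.
Proof.
  intros H eps He.
  destruct (H (eps / (Cmod s + 1))) as [del [Hdel Hh]]. { apply Rdiv_lt_0_compat; auto. pose proof (Cmod_ge_0 s); lra. }
  exists del. split; auto. intros h Hh'. specialize (Hh h Hh').
  replace (y + s * g (t + h)%R - (y + s * g t) - RtoC h * (s * d))%C with (s * (g (t + h)%R - g t - RtoC h * d))%C by ring.
  rewrite Cmod_mult. pose proof (Cmod_ge_0 s). pose proof (Rabs_pos h).
  apply Rle_trans with (Cmod s * (eps / (Cmod s + 1) * Rabs h)).
  - apply Rmult_le_compat_l; auto.
  - assert (Cmod s * (eps / (Cmod s + 1)) <= eps).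
    { unfold Rdiv. rewrite <- Rmult_assoc. apply Rmult_le_reg_r with (r := Cmod s + 1); [lra|].
      rewrite Rmult_assoc, Rinv_l by lra. nra. }
    nra.
Qed.

Lemma is_RInt_Cmult (f : R -> C) (a b : R) (l c : C) :
  is_RInt (V:=CR) f a b l -> is_RInt (V:=CR) (fun t => c * f t)%C a b (c * l)%C.
Proof.
  intros H.
  pose proof (is_RInt_fct_extend_fst (U:=R_NormedModule) (V:=R_NormedModule) f a b l H) as H1.
  pose proof (is_RInt_fct_extend_snd (U:=R_NormedModule) (V:=R_NormedModule) f a b l H) as H2.
  replace (c * l)%C with ((fst c * fst l - snd c * snd l, fst c * snd l + snd c * fst l) : C)
    by (destruct c, l; ceq).
  apply (is_RInt_fct_extend_pair (U:=R_NormedModule) (V:=R_NormedModule)).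
  - pose proof (is_RInt_minus (V:=R_NormedModule) _ _ _ _ _ _ (is_RInt_scal _ _ _ (fst c) _ H1) (is_RInt_scal _ _ _ (snd c) _ H2)) as H3.
    eapply is_RInt_ext; [|exact H3]. intros x _. simpl. destruct c, (f x). simpl.
    unfold minus, plus, opp, scal, mult; simpl; unfold mult; simpl. ring.
  - pose proof (is_RInt_plus (V:=R_NormedModule) _ _ _ _ _ _ (is_RInt_scal _ _ _ (fst c) _ H2) (is_RInt_scal _ _ _ (snd c) _ H1)) as H3.
    eapply is_RInt_ext; [|exact H3]. intros x _. simpl. destruct c, (f x). simpl.
    unfold minus, plus, opp, scal, mult; simpl; unfold mult; simpl. ring.
Qed.

Lemma ee_per : ee (2 * PI) = ee 0.
Proof. unfold ee. rewrite cos_2PI, sin_2PI, cos_0, sin_0. reflexivity. Qed.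
Lemma eb_per : eb (2 * PI) = eb 0.
Proof. unfold eb. rewrite cos_2PI, sin_2PI, cos_0, sin_0. reflexivity. Qed.

Lemma circ_in (y : C) (s th : R) : Cmod (y + RtoC s * ee th) <= Cmod y + Rabs s.
Proof. eapply Rle_trans; [apply Cmod_triangle|]. rewrite Cmod_RtoC_mult, Cmod_ee. lra. Qed.

Lemma is_RInt_Cplus (f g : R -> C) (a b : R) (lf lg : C) :
  is_RInt (V:=CR) f a b lf -> is_RInt (V:=CR) g a b lg -> is_RInt (V:=CR) (fun t => f t + g t)%C a b (lf + lg)%C.
Proof.
  intros Hf Hg. pose proof (is_RInt_plus (V:=CR) _ _ _ _ _ _ Hf Hg) as H.
  replace (lf + lg)%C with (plus (G:=CR) lf lg) by (apply injective_projections; reflexivity).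
  eapply is_RInt_ext; [|exact H]. intros x _. apply injective_projections; reflexivity.
Qed.

Lemma rcont_ee (th : R) : rcont ee th.
Proof. eapply deps_rcont. apply deps_ee. Qed.
Lemma rcont_eb (th : R) : rcont eb th.
Proof. eapply deps_rcont. apply deps_eb. Qed.

Lemma is_RInt_uniq (f : R -> C) (a b : R) (l1 l2 : C) :
  is_RInt (V:=CR) f a b l1 -> is_RInt (V:=CR) f a b l2 -> l1 = l2.
Proof. intros H1 H2. apply (is_RInt_unique (V:=CR)) in H1. apply (is_RInt_unique (V:=CR)) in H2. congruence. Qed.

Section Circ.
Variables u F : C -> C.
Variable rho : R.
Hypothesis HF : forall z, Cmod z < rho -> cdiff F z (u z).
Hypothesis Hu : forall z, Cmod z < rho -> ucont u z.

Definition Phi (y : C) (s : R) : C := RInt (V:=CR) (fun th => F (y + RtoC s * ee th) * eb th)%C 0 (2 * PI).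
Definition Psi (y : C) (s : R) : C := RInt (V:=CR) (fun th => u (y + RtoC s * ee th))%C 0 (2 * PI).

Variable y : C.

Lemma rcont_u_circ (s th : R) : Cmod y + Rabs s < rho -> rcont (fun t => u (y + RtoC s * ee t))%C th.
Proof.
  intros Hs. apply rcont_comp.
  - apply Hu. eapply Rle_lt_trans; [apply circ_in|exact Hs].
  - eapply deps_rcont. apply deps_affine. apply deps_ee.
Qed.

Lemma rcont_F_circ (s th : R) : Cmod y + Rabs s < rho -> rcont (fun t => F (y + RtoC s * ee t))%C th.
Proof.
  intros Hs. apply rcont_comp.
  - intros eps He. eapply cdiff_cont; [apply HF|exact He]. eapply Rle_lt_trans; [apply circ_in|exact Hs].
  - eapply deps_rcont. apply deps_affine. apply deps_ee.
Qed.

Lemma Psi_correct (s : R) : Cmod y + Rabs s < rho ->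
  is_RInt (V:=CR) (fun th => u (y + RtoC s * ee th))%C 0 (2 * PI) (Psi y s).
Proof.
  intros Hs. apply (RInt_correct (V:=CR)). apply ex_RInt_continuous. intros z _.
  apply rcont_continuous. apply rcont_u_circ; auto.
Qed.

Lemma Phi_correct (s : R) : Cmod y + Rabs s < rho ->
  is_RInt (V:=CR) (fun th => F (y + RtoC s * ee th) * eb th)%C 0 (2 * PI) (Phi y s).
Proof.
  intros Hs. apply (RInt_correct (V:=CR)). apply ex_RInt_continuous. intros z _.
  apply rcont_continuous. apply rcont_mult; [apply rcont_F_circ; auto|apply rcont_eb].
Qed.

Lemma Phi_Psi (s : R) : Cmod y + Rabs s < rho -> Phi y s = (RtoC s * Psi y s)%C.
Proof.
  intros Hs.
  set (g := fun th => (F (y + RtoC s * ee th) * eb th)%C).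
  set (dg := fun th => (u (y + RtoC s * ee th) * (RtoC s * (Ci * ee th)) * eb th
                        + F (y + RtoC s * ee th) * (- Ci * eb th))%C).
  assert (Hin : forall th, Cmod (y + RtoC s * ee th) < rho) by (intros; eapply Rle_lt_trans; [apply circ_in|exact Hs]).
  assert (Hd : forall th, deps g th (dg th)).
  { intros th. unfold g, dg. apply deps_mult; [|apply deps_eb].
    apply deps_chain; [apply HF; auto|]. apply deps_affine. apply deps_ee. }
  assert (Hdc : forall th, rcont dg th).
  { intros th. unfold dg. apply rcont_plus; apply rcont_mult.
    - apply rcont_mult; [apply rcont_u_circ; auto|]. apply rcont_mult; [apply rcont_const|].
      apply rcont_mult; [apply rcont_const|apply rcont_ee].
    - apply rcont_eb.
    - apply rcont_F_circ; auto.
    - apply rcont_mult; [apply rcont_const|apply rcont_eb]. }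
  pose proof (is_RInt_derive (V:=CR) g dg 0 (2 * PI)
     (fun x _ => deps_is_derive _ _ _ (Hd x)) (fun x _ => rcont_continuous _ _ (Hdc x))) as H.
  assert (E0 : minus (G:=CR) (g (2 * PI)) (g 0) = RtoC 0).
  { unfold g. rewrite ee_per, eb_per. destruct (F (y + RtoC s * ee 0)%C * eb 0)%C. ceq; unfold minus, plus, opp; simpl; ring. }
  rewrite E0 in H.
  assert (H2 : is_RInt (V:=CR) dg 0 (2 * PI) (Ci * RtoC s * Psi y s + - Ci * Phi y s)%C).
  { pose proof (is_RInt_Cmult _ _ _ _ (Ci * RtoC s)%C (Psi_correct s Hs)) as H3.
    pose proof (is_RInt_Cmult _ _ _ _ (- Ci)%C (Phi_correct s Hs)) as H4.
    pose proof (is_RInt_Cplus _ _ _ _ _ _ H3 H4) as H5.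
    eapply is_RInt_ext; [|exact H5]. intros x _. unfold dg.
    pose proof (ee_eb x) as Ex.
    replace (u (y + RtoC s * ee x) * (RtoC s * (Ci * ee x)) * eb x)%C
      with (Ci * RtoC s * u (y + RtoC s * ee x) * (ee x * eb x))%C by ring.
    rewrite Ex. match goal with |- ?a = ?b => change (@eq C a b) end. ring. }
  pose proof (is_RInt_uniq _ _ _ _ _ H H2) as E.
  apply Ceq_minus.
  replace (Phi y s - RtoC s * Psi y s)%C with (Ci * (Ci * RtoC s * Psi y s + - Ci * Phi y s))%C
    by (replace (Ci * (Ci * RtoC s * Psi y s + - Ci * Phi y s))%C with ((Ci * Ci) * (RtoC s * Psi y s - Phi y s))%C by ring;
        replace (Ci * Ci)%C with (RtoC (-1)) by (unfold Ci; ceq); ceq).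
  rewrite <- E. ring.
Qed.

End Circ.

Record proj (pi : C -> R) : Prop := {
  pi_sub : forall z w, pi (z - w)%C = pi z - pi w;
  pi_scal : forall (r : R) z, pi (RtoC r * z)%C = r * pi z;
  pi_bnd : forall z, Rabs (pi z) <= Cmod z }.

Lemma proj_fst : proj fst.
Proof. split. - intros [] []; simpl; ring. - intros r []; simpl; ring. - apply Cmod_re. Qed.
Lemma proj_snd : proj snd.
Proof. split. - intros [] []; simpl; ring. - intros r []; simpl; ring. - apply Cmod_im. Qed.

Lemma rcont_pi (pi : C -> R) (Hp : proj pi) (g : R -> C) (t : R) :
  rcont g t -> @continuous R_UniformSpace R_UniformSpace (fun s => pi (g s)) t.
Proof.
  intros H. apply (filterlim_locally (T:=R_UniformSpace) (U:=R_UniformSpace)). intros eps.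
  destruct (H eps (cond_pos eps)) as [d [Hd Hs]].
  exists (mkposreal d Hd). intros s Hst. simpl in Hst. specialize (Hs s Hst).
  unfold ball; simpl; unfold AbsRing_ball, minus, plus, opp; simpl; unfold abs; simpl.
  eapply Rle_lt_trans; [|exact Hs]. replace (pi (g s) + - pi (g t)) with (pi (g s) - pi (g t)) by ring.
  rewrite <- (pi_sub _ Hp). apply (pi_bnd _ Hp).
Qed.

Lemma deps_pi (pi : C -> R) (Hp : proj pi) (g : R -> C) (t : R) (d : C) :
  deps g t d -> is_derive (fun s => pi (g s)) t (pi d).
Proof.
  intros H. apply is_derive_Reals. intros eps He.
  destruct (H (eps / 2)) as [del [Hdel Hh]]; [lra|].
  exists (mkposreal del Hdel). intros h Hh0 Hhd. simpl in Hhd.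
  specialize (Hh h Hhd).
  assert (E : (pi (g (t + h)) - pi (g t)) / h - pi d = (pi (g (t + h)%R - g t - RtoC h * d)%C) / h).
  { rewrite !(pi_sub _ Hp), (pi_scal _ Hp). field. auto. }
  rewrite E. unfold Rdiv. rewrite Rabs_mult, Rabs_inv.
  pose proof (pi_bnd _ Hp (g (t + h)%R - g t - RtoC h * d)%C).
  assert (0 < Rabs h) by (apply Rabs_pos_lt; auto).
  apply Rmult_lt_reg_r with (r := Rabs h); auto.
  rewrite Rmult_assoc, Rinv_l by lra. nra.
Qed.

Section Param.
Variables u F : C -> C.
Variable rho : R.
Hypothesis HF : forall z, Cmod z < rho -> cdiff F z (u z).
Hypothesis Hu : forall z, Cmod z < rho -> ucont u z.
Variable y : C.
Variable pi : C -> R.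
Hypothesis Hp : proj pi.

Definition fpar (s th : R) : R := pi (F (y + RtoC s * ee th) * eb th)%C.

Lemma fpar_deriv (s th : R) : Cmod y + Rabs s < rho -> is_derive (fun z => fpar z th) s (pi (u (y + RtoC s * ee th))).
Proof.
  intros Hs. unfold fpar.
  replace (u (y + RtoC s * ee th)%C) with (u (y + RtoC s * ee th)%C * ee th * eb th)%C.
  2:{ rewrite <- Cmult_assoc, ee_eb. ring. }
  apply deps_pi; auto.
  assert (D1 : deps (fun z => y + RtoC z * ee th)%C s (ee th)).
  { intros eps He. exists 1. split; [lra|]. intros h _.
    replace (y + RtoC (s + h) * ee th - (y + RtoC s * ee th) - RtoC h * ee th)%C with (RtoC 0) by (rewrite RtoC_plus; ring).
    rewrite Cmod_0. pose proof (Rabs_pos h). nra. }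
  pose proof (deps_chain F (u (y + RtoC s * ee th))%C _ s _ (HF _ ltac:(eapply Rle_lt_trans; [apply circ_in|exact Hs])) D1) as D2.
  assert (D3 : deps (fun z => F (y + RtoC z * ee th) * eb th)%C s (u (y + RtoC s * ee th) * ee th * eb th)%C).
  { intros eps He. destruct (D2 (eps / (1 + 1))) as [del [Hdel Hh]]; [lra|].
    exists del. split; auto. intros h Hh'. specialize (Hh h Hh').
    replace (F (y + RtoC (s + h)%R * ee th) * eb th - F (y + RtoC s * ee th) * eb th - RtoC h * (u (y + RtoC s * ee th) * ee th * eb th))%C
      with ((F (y + RtoC (s + h)%R * ee th) - F (y + RtoC s * ee th) - RtoC h * (u (y + RtoC s * ee th) * ee th)) * eb th)%C by ring.
    rewrite Cmod_mult, Cmod_eb. pose proof (Rabs_pos h). nra. }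
  exact D3.
Qed.

Lemma Phi_pi_derive (s0 : R) : Cmod y + Rabs s0 < rho ->
  is_derive (fun s => pi (Phi F y s)) s0 (pi (Psi u y s0)).
Proof.
  intros Hs0.
  set (m := rho - Cmod y - Rabs s0). assert (Hm : 0 < m) by (unfold m; lra).
  assert (Hloc : forall s, Rabs (s - s0) < m -> Cmod y + Rabs s < rho).
  { intros s Hs. pose proof (Rabs_triang_inv s s0). unfold m in Hs. 
    assert (Rabs s <= Rabs s0 + Rabs (s - s0)) by (replace s with (s0 + (s - s0)) at 1 by ring; apply Rabs_triang). lra. }
  assert (EPhi : forall s, Cmod y + Rabs s < rho -> pi (Phi F y s) = RInt (fun th => fpar s th) 0 (2 * PI)).
  { intros s Hs. pose proof (Phi_correct u F rho HF y s Hs) as H.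
    symmetry. apply is_RInt_unique.
    destruct Hp as [Hsub Hsc Hb].
    assert (Hlin : forall z, pi z = fst z * pi (RtoC 1) + snd z * pi Ci).
    { intros [a b]. replace ((a, b) : C) with (RtoC a * RtoC 1 - RtoC (- b) * Ci)%C by (unfold Ci; ceq).
      rewrite Hsub, !Hsc. simpl. ring. }
    pose proof (is_RInt_fct_extend_fst (U:=R_NormedModule) (V:=R_NormedModule) _ _ _ _ H) as H1.
    pose proof (is_RInt_fct_extend_snd (U:=R_NormedModule) (V:=R_NormedModule) _ _ _ _ H) as H2.
    pose proof (is_RInt_plus (V:=R_NormedModule) _ _ _ _ _ _ (is_RInt_scal _ _ _ (pi (RtoC 1)) _ H1) (is_RInt_scal _ _ _ (pi Ci) _ H2)) as H3.
    rewrite Hlin.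
    replace (fst (Phi F y s) * pi (RtoC 1) + snd (Phi F y s) * pi Ci) with
      (plus (scal (pi (RtoC 1)) (fst (Phi F y s))) (scal (pi Ci) (snd (Phi F y s)))) by
      (unfold plus, scal; simpl; unfold mult; simpl; ring).
    eapply is_RInt_ext; [|exact H3]. intros x _. unfold fpar. rewrite (Hlin (F (y + RtoC s * ee x) * eb x)%C).
    unfold plus, scal; simpl; unfold mult; simpl; ring. }
  apply (is_derive_ext_loc (fun s => RInt (fun th => fpar s th) 0 (2 * PI))).
  { exists (mkposreal m Hm). intros s Hs. simpl in Hs. unfold ball in Hs; simpl in Hs; unfold AbsRing_ball, abs, minus, plus, opp in Hs; simpl in Hs.
    symmetry. apply EPhi. apply Hloc. exact Hs. }
  assert (EPsi : pi (Psi u y s0) = RInt (fun th => Derive (fun z => fpar z th) s0) 0 (2 * PI)).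
  { pose proof (Psi_correct u rho Hu y s0 Hs0) as H.
    symmetry. apply is_RInt_unique.
    destruct Hp as [Hsub Hsc Hb].
    assert (Hlin : forall z, pi z = fst z * pi (RtoC 1) + snd z * pi Ci).
    { intros [a b]. replace ((a, b) : C) with (RtoC a * RtoC 1 - RtoC (- b) * Ci)%C by (unfold Ci; ceq).
      rewrite Hsub, !Hsc. simpl. ring. }
    pose proof (is_RInt_fct_extend_fst (U:=R_NormedModule) (V:=R_NormedModule) _ _ _ _ H) as H1.
    pose proof (is_RInt_fct_extend_snd (U:=R_NormedModule) (V:=R_NormedModule) _ _ _ _ H) as H2.
    pose proof (is_RInt_plus (V:=R_NormedModule) _ _ _ _ _ _ (is_RInt_scal _ _ _ (pi (RtoC 1)) _ H1) (is_RInt_scal _ _ _ (pi Ci) _ H2)) as H3.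
    rewrite Hlin.
    replace (fst (Psi u y s0) * pi (RtoC 1) + snd (Psi u y s0) * pi Ci) with
      (plus (scal (pi (RtoC 1)) (fst (Psi u y s0))) (scal (pi Ci) (snd (Psi u y s0)))) by
      (unfold plus, scal; simpl; unfold mult; simpl; ring).
    eapply is_RInt_ext; [|exact H3]. intros x _.
    replace (Derive (fun z => fpar z x) s0) with (pi (u (y + RtoC s0 * ee x))%C)
      by (symmetry; apply is_derive_unique; apply fpar_deriv; auto).
    rewrite (Hlin (u (y + RtoC s0 * ee x))%C).
    unfold plus, scal; simpl; unfold mult; simpl; ring. }
  rewrite EPsi.
  apply is_derive_RInt_param.
  - exists (mkposreal m Hm). intros s Hs th _. simpl in Hs.
    unfold ball in Hs; simpl in Hs; unfold AbsRing_ball, abs, minus, plus, opp in Hs; simpl in Hs.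
    eexists. apply fpar_deriv. apply Hloc. exact Hs.
  - intros th _ eps.
    set (z0 := (y + RtoC s0 * ee th)%C).
    destruct (Hu z0 ltac:(unfold z0; eapply Rle_lt_trans; [apply circ_in|exact Hs0]) eps (cond_pos eps)) as [du [Hdu Hu0]].
    set (K := Rabs s0 + 1).
    assert (HK : 0 < K) by (unfold K; pose proof (Rabs_pos s0); lra).
    destruct (rcont_ee th (du / (2 * K))) as [de [Hde Hee]]. { apply Rdiv_lt_0_compat; lra. }
    assert (Hpos : 0 < Rmin m (Rmin de (du / 2))) by (repeat apply Rmin_pos; lra).
    exists (mkposreal _ Hpos). intros s t Hs Ht. simpl in Hs, Ht.
    assert (Hs1 : Rabs (s - s0) < m) by (eapply Rlt_le_trans; [exact Hs|apply Rmin_l]).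
    assert (Hs2 : Rabs (s - s0) < du / 2) by (eapply Rlt_le_trans; [exact Hs|]; eapply Rle_trans; [apply Rmin_r|apply Rmin_r]).
    assert (Ht1 : Rabs (t - th) < de) by (eapply Rlt_le_trans; [exact Ht|]; eapply Rle_trans; [apply Rmin_r|apply Rmin_l]).
    replace (Derive (fun z => fpar z t) s) with (pi (u (y + RtoC s * ee t))%C)
      by (symmetry; apply is_derive_unique; apply fpar_deriv; auto).
    replace (Derive (fun z => fpar z th) s0) with (pi (u (y + RtoC s0 * ee th))%C)
      by (symmetry; apply is_derive_unique; apply fpar_deriv; auto).
    rewrite <- (pi_sub _ Hp). eapply Rle_lt_trans; [apply (pi_bnd _ Hp)|].
    apply Hu0. fold z0.
    specialize (Hee t Ht1).
    replace (y + RtoC s * ee t - z0)%C with (RtoC (s - s0) * ee t + RtoC s0 * (ee t - ee th))%C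
      by (unfold z0; rewrite RtoC_minus; ring).
    eapply Rle_lt_trans; [apply Cmod_triangle|]. rewrite !Cmod_RtoC_mult, Cmod_ee.
    assert (Rabs s0 * Cmod (ee t - ee th) <= K * (du / (2 * K))).
    { apply Rmult_le_compat; [apply Rabs_pos|apply Cmod_ge_0|unfold K; lra|lra]. }
    assert (K * (du / (2 * K)) = du / 2) by (field; lra).
    lra.
  - exists (mkposreal m Hm). intros s Hs. simpl in Hs.
    unfold ball in Hs; simpl in Hs; unfold AbsRing_ball, abs, minus, plus, opp in Hs; simpl in Hs.
    apply (ex_RInt_continuous (V:=R_CompleteNormedModule)). intros z _. unfold fpar.
    apply (rcont_pi pi Hp (fun th => F (y + RtoC s * ee th) * eb th)%C).
    apply rcont_mult; [apply rcont_F_circ with (u := u) (rho := rho); auto|apply rcont_eb].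
Qed.

End Param.

Lemma ode_lemma (P D : R -> R) (sig : R) :
  (forall s, Rabs s < sig -> is_derive P s (D s)) ->
  (forall s, Rabs s < sig -> P s = s * D s) ->
  forall r, 0 < r < sig -> P r = r * D 0.
Proof.
  intros HD HP r Hr.
  set (g := fun s => P s / s).
  assert (Hg : forall s, 0 < s < sig -> is_derive g s 0).
  { intros s Hs. unfold g.
    assert (Hs' : Rabs s < sig) by (rewrite Rabs_right; lra).
    pose proof (is_derive_div P (fun t => t) s (D s) 1 (HD s Hs') (is_derive_id s) ltac:(lra)) as H.
    replace 0 with ((D s * s - P s * 1) / s ^ 2) at 1. exact H.
    rewrite (HP s Hs'). field. lra. }
  assert (Hconst : forall s, 0 < s < sig -> g s = g r).
  { intros s Hs.
    destruct (MVT_gen g s r (fun _ => 0)) as [c [Hc Hc2]].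
    - intros x Hx. apply Hg. split.
      + eapply Rle_lt_trans; [|apply Hx]. apply Rmin_case; lra.
      + eapply Rlt_le_trans; [apply Hx|]. apply Rmax_case; lra.
    - intros x Hx. apply continuity_pt_filterlim. apply (ex_derive_continuous (K:=R_AbsRing) (V:=R_NormedModule)).
      eexists. apply Hg. split.
      + eapply Rlt_le_trans; [|apply Hx]. apply Rmin_case; lra.
      + eapply Rle_lt_trans; [apply Hx|]. apply Rmax_case; lra.
    - lra. }
  assert (HP0 : P 0 = 0) by (rewrite HP; [ring|rewrite Rabs_R0; lra]).
  assert (Hlim : g r = D 0).
  { destruct (Req_dec (g r) (D 0)) as [|Hne]; auto. exfalso.
    assert (Hsig : Rabs 0 < sig) by (rewrite Rabs_R0; lra).
    pose proof (proj1 (is_derive_Reals P 0 (D 0)) (HD 0 Hsig)) as HL.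
    destruct (HL (Rabs (g r - D 0))) as [del Hdel]. { apply Rabs_pos_lt. lra. }
    set (h := Rmin (del / 2) (r / 2)).
    assert (Hh : 0 < h) by (unfold h; apply Rmin_pos; [pose proof (cond_pos del)|]; lra).
    assert (Hh2 : h < del) by (unfold h; eapply Rle_lt_trans; [apply Rmin_l|]; pose proof (cond_pos del); lra).
    assert (Hh3 : h < r) by (unfold h; eapply Rle_lt_trans; [apply Rmin_r|]; lra).
    specialize (Hdel h ltac:(lra) ltac:(rewrite Rabs_right; lra)).
    rewrite Rplus_0_l, HP0, Rminus_0_r in Hdel.
    fold (g h) in Hdel. rewrite (Hconst h ltac:(lra)) in Hdel. lra. }
  replace (P r) with (r * g r) by (unfold g; field; lra). rewrite Hlim. reflexivity.
Qed.

Section Tid.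
Variables u F : C -> C.
Variable rho : R.
Hypothesis HF : forall z, Cmod z < rho -> cdiff F z (u z).
Hypothesis Hu : forall z, Cmod z < rho -> ucont u z.

Lemma Psi_0 (y : C) : Psi u y 0 = (RtoC (2 * PI) * u y)%C.
Proof.
  unfold Psi. apply (is_RInt_unique (V:=CR)).
  pose proof (is_RInt_const (V:=CR) 0 (2 * PI) (u y)) as H.
  replace (RtoC (2 * PI) * u y)%C with (scal (V:=CR) (2 * PI - 0) (u y)) by (rewrite scal_R_Cmult; f_equal; f_equal; ring).
  eapply is_RInt_ext; [|exact H]. intros x _. simpl. f_equal. ring.
Qed.

Theorem circle_identity (y : C) (r : R) : 0 < r -> Cmod y + r < rho ->
  Phi F y r = (RtoC r * (RtoC (2 * PI) * u y))%C.
Proof.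
  intros Hr Hyr.
  set (sig := rho - Cmod y).
  assert (Hpi : forall pi, proj pi -> pi (Phi F y r) = r * pi (Psi u y 0)).
  { intros pi Hp.
    apply (ode_lemma (fun s => pi (Phi F y s)) (fun s => pi (Psi u y s)) sig).
    - intros s Hs. apply Phi_pi_derive with (rho := rho); auto. unfold sig in Hs. lra.
    - intros s Hs. rewrite (Phi_Psi u F rho HF Hu y s) by (unfold sig in Hs; lra). apply (pi_scal _ Hp).
    - unfold sig. lra. }
  rewrite <- Psi_0.
  pose proof (Hpi fst proj_fst). pose proof (Hpi snd proj_snd).
  apply injective_projections.
  - rewrite H. destruct (Psi u y 0). simpl. ring.
  - rewrite H0. destruct (Psi u y 0). simpl. ring.
Qed.

End Tid.

Theorem cauchy_lip (u : C -> C) (Rd M : R) : 0 < Rd ->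
  (forall z, Cmod z < Rd -> exists l, cdiff u z l) ->
  (forall z, Cmod z < Rd -> Cmod (u z) <= M) ->
  forall x y, Cmod x < Rd / 8 -> Cmod y < Rd / 8 -> Cmod (u x - u y) <= 8 * M / Rd * Cmod (x - y).
Proof.
  intros HR Hd HM x y Hx Hy.
  set (rho := Rd / 2).
  assert (Hd' : forall z, Cmod z <= rho -> exists l, cdiff u z l) by (intros z Hz; apply Hd; unfold rho in Hz; lra).
  set (F := Fp u).
  assert (HF : forall z, Cmod z < rho -> cdiff F z (u z)) by (intros; apply Fp_cdiff with (rho := rho); auto).
  assert (Hu : forall z, Cmod z < rho -> ucont u z) by (intros; apply Hc_prim with (rho := rho); auto; lra).
  set (r := Rd / 8).
  assert (Hr : 0 < r) by (unfold r; lra).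
  pose proof (circle_identity u F rho HF Hu x r Hr ltac:(unfold rho, r; lra)) as Ix.
  pose proof (circle_identity u F rho HF Hu y r Hr ltac:(unfold rho, r; lra)) as Iy.
  assert (HM0 : 0 <= M) by (pose proof (HM 0 ltac:(rewrite Cmod_0; lra)) as H0; pose proof (Cmod_ge_0 (u 0)); lra).
  assert (Hdiff : Cmod (Phi F x r - Phi F y r) <= (2 * PI - 0) * (M * Cmod (x - y))).
  { pose proof (Phi_correct u F rho HF x r ltac:(rewrite Rabs_right; unfold rho, r; lra)) as Px.
    pose proof (Phi_correct u F rho HF y r ltac:(rewrite Rabs_right; unfold rho, r; lra)) as Py.
    pose proof (is_RInt_minus (V:=CR) _ _ _ _ _ _ Px Py) as Pd.
    rewrite <- norm_CR.
    replace (Phi F x r - Phi F y r)%C with (minus (G:=CR) (Phi F x r) (Phi F y r))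
      by (apply injective_projections; reflexivity).
    eapply (norm_RInt_le (V:=C_R_NormedModule) _ (fun _ => M * Cmod (x - y)) 0 (2 * PI)); [pose proof PI_RGT_0; lra| |exact Pd|].
    - intros th Hth. rewrite norm_CR.
      match goal with |- Cmod ?X <= _ =>
        replace X with ((F (x + RtoC r * ee th) - F (y + RtoC r * ee th)) * eb th)%C end.
      2:{ symmetry. transitivity (F (x + RtoC r * ee th) * eb th - F (y + RtoC r * ee th) * eb th)%C.
          - apply injective_projections; reflexivity.
          - ring. }
      rewrite Cmod_mult, Cmod_eb, Rmult_1_r.
      replace (x - y)%C with ((x + RtoC r * ee th) - (y + RtoC r * ee th))%C by ring.
      apply Fp_lip with (rho := rho); auto.
      + eapply Rle_trans; [apply circ_in|]. rewrite Rabs_right; unfold rho, r; lra.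
      + eapply Rle_trans; [apply circ_in|]. rewrite Rabs_right; unfold rho, r; lra.
      + intros z Hz. apply HM. unfold rho in Hz. lra.
    - pose proof (is_RInt_const (V:=R_NormedModule) 0 (2 * PI) (M * Cmod (x - y))) as HC.
      assert (E : scal (2 * PI - 0) (M * Cmod (x - y)) = (2 * PI - 0) * (M * Cmod (x - y)))
        by (unfold scal; simpl; unfold mult; simpl; ring).
      exact (eq_ind _ (fun v => is_RInt (V:=R_NormedModule) (fun _ => M * Cmod (x - y)) 0 (2 * PI) v) HC _ E). }
  rewrite Ix, Iy in Hdiff.
  replace (RtoC r * (RtoC (2 * PI) * u x) - RtoC r * (RtoC (2 * PI) * u y))%C
    with (RtoC (r * (2 * PI)) * (u x - u y))%C in Hdiff by (rewrite RtoC_mult; ring).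
  rewrite Cmod_RtoC_mult in Hdiff. pose proof PI_RGT_0.
  rewrite Rabs_right in Hdiff by nra.
  pose proof (Cmod_ge_0 (u x - u y)). pose proof (Cmod_ge_0 (x - y)).
  apply Rmult_le_reg_l with (r := r * (2 * PI)); [nra|].
  replace (r * (2 * PI) * (8 * M / Rd * Cmod (x - y))) with ((2 * PI - 0) * (M * Cmod (x - y))) by (unfold r; field; lra).
  exact Hdiff.
Qed.

Lemma Cmod_rev_tri (a b : C) : Cmod a - Cmod b <= Cmod (a + b).
Proof.
  replace a with ((a + b) + - b)%C at 1 by ring.
  pose proof (Cmod_triangle (a + b) (- b)). rewrite Cmod_opp in H. lra.
Qed.

Lemma core (f : C -> C) (rho eta : R) (z0 : C) (s t : R) (w : C) :
  0 <= eta <= 1/3 ->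
  (forall x y, Cmod x < rho -> Cmod y < rho -> Cmod ((f x - x) - (f y - y)) <= eta * Cmod (x - y)) ->
  Cmod z0 < rho -> Cmod (f z0) < rho -> f z0 <> z0 ->
  0 <= s <= 1 -> 0 <= t <= 1 ->
  Cmod w < rho -> f w = w ->
  let z1 := f z0 in
  let zeta := (z0 + RtoC t * (z1 - z0))%C in
  let Hp := (RtoC (1 - s) * (z1 + RtoC t * (f z1 - z1)) + RtoC s * f zeta)%C in
  zeta <> w /\ Cmod (zeta - w) / 2 <= Cmod (Hp - w) /\ Cmod (Hp - w) <= 3 / 2 * Cmod (zeta - w).
Proof.
  intros Heta Hlip Hz0 Hz1 Hnf Hs Ht Hw Hfw z1 zeta Hp.
  set (h := fun x => (f x - x)%C).
  assert (Hzeta : Cmod zeta < rho).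
  { unfold zeta. apply Rle_lt_trans with (Rmax (Cmod z0) (Cmod z1)).
    - apply convex_cdisk; auto; [apply Rmax_l|apply Rmax_r].
    - apply Rmax_lub_lt; auto. }
  assert (Hhw : forall x, Cmod x < rho -> Cmod (h x) <= eta * Cmod (x - w)).
  { intros x Hx. specialize (Hlip x w Hx Hw). unfold h. rewrite Hfw in Hlip.
    replace (f x - x - (w - w))%C with (f x - x)%C in Hlip by ring. exact Hlip. }
  assert (E1 : z1 = (z0 + h z0)%C) by (unfold h, z1; ring).
  assert (Hz0z : Cmod (z0 - zeta) <= Cmod (h z0)).
  { unfold zeta. rewrite E1. replace (z0 - (z0 + RtoC t * (z0 + h z0 - z0)))%C with (- (RtoC t * h z0))%C by ring.
    rewrite Cmod_opp, Cmod_RtoC_mult, Rabs_right by lra. pose proof (Cmod_ge_0 (h z0)). nra. }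
  assert (Hz1z : Cmod (z1 - zeta) <= Cmod (h z0)).
  { unfold zeta. rewrite E1. replace (z0 + h z0 - (z0 + RtoC t * (z0 + h z0 - z0)))%C with (RtoC (1 - t) * h z0)%C
      by (rewrite RtoC_minus; ring).
    rewrite Cmod_RtoC_mult, Rabs_right by lra. pose proof (Cmod_ge_0 (h z0)). nra. }
  set (D := Cmod (zeta - w)).
  assert (HD0 : Cmod (z0 - w) <= 3 / 2 * D).
  { assert (Cmod (z0 - w) <= Cmod (z0 - zeta) + D).
    { replace (z0 - w)%C with ((z0 - zeta) + (zeta - w))%C by ring. apply Cmod_triangle. }
    pose proof (Hhw z0 Hz0). pose proof (Cmod_ge_0 (z0 - w)).
    assert (eta * Cmod (z0 - w) <= 1/3 * Cmod (z0 - w)) by nra. lra. }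
  assert (HD1 : Cmod (z1 - w) <= 3 / 2 * D).
  { assert (Cmod (z1 - w) <= Cmod (z1 - zeta) + D).
    { replace (z1 - w)%C with ((z1 - zeta) + (zeta - w))%C by ring. apply Cmod_triangle. }
    pose proof (Hhw z0 Hz0). pose proof (Cmod_ge_0 (z0 - w)).
    assert (eta * Cmod (z0 - w) <= 1/3 * (3 / 2 * D)) by nra. lra. }
  assert (Hne : zeta <> w).
  { intros Heq. assert (D = 0) by (unfold D; rewrite Heq; replace (w - w)%C with (RtoC 0) by ring; apply Cmod_0).
    assert (Cmod (z0 - w) = 0) by (pose proof (Cmod_ge_0 (z0 - w)); lra).
    apply Cmod_eq_0 in H0. apply Hnf.
    assert (Hzw : z0 = w) by (apply Ceq_minus; exact H0). rewrite Hzw. exact Hfw. }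
  split; auto.
  assert (EH : (Hp - w)%C = ((zeta - w) + (RtoC (1 - s) * (RtoC (1 - t) * h z0 + RtoC t * h z1) + RtoC s * h zeta))%C).
  { unfold Hp, h, zeta. rewrite !RtoC_minus. unfold z1. ring. }
  rewrite EH.
  set (e := (RtoC (1 - s) * (RtoC (1 - t) * h z0 + RtoC t * h z1) + RtoC s * h zeta)%C).
  assert (He : Cmod e <= D / 2).
  { unfold e. eapply Rle_trans; [apply Cmod_triangle|].
    rewrite !Cmod_RtoC_mult. rewrite (Rabs_right (1 - s)), (Rabs_right s) by lra.
    assert (Hi : Cmod (RtoC (1 - t) * h z0 + RtoC t * h z1) <= eta * (3 / 2 * D)).
    { eapply Rle_trans; [apply Cmod_triangle|]. rewrite !Cmod_RtoC_mult.
      rewrite (Rabs_right (1 - t)), (Rabs_right t) by lra.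
      pose proof (Hhw z0 Hz0). pose proof (Hhw z1 Hz1).
      assert (Cmod (h z0) <= eta * (3 / 2 * D)) by nra.
      assert (Cmod (h z1) <= eta * (3 / 2 * D)) by nra.
      nra. }
    pose proof (Hhw zeta Hzeta). fold D in H.
    assert (eta * D <= eta * (3 / 2 * D)) by (pose proof (Cmod_ge_0 (zeta - w)); fold D in H0; nra).
    assert (eta * (3 / 2 * D) <= D / 2) by (pose proof (Cmod_ge_0 (zeta - w)); fold D in H1; nra).
    nra. }
  pose proof (Cmod_rev_tri (zeta - w) e). fold D in H. split; [lra|].
  eapply Rle_trans; [apply Cmod_triangle|]. fold D. lra.
Qed.

Lemma pow_le_sq (x : R) (n : nat) : 0 <= x <= 1 -> (2 <= n)%nat -> x ^ n <= x ^ 2.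
Proof.
  intros Hx Hn. replace n with (2 + (n - 2))%nat by lia. rewrite pow_add.
  assert (x ^ (n - 2) <= 1) by (rewrite <- (pow1 (n - 2)); apply pow_incr; lra).
  assert (0 <= x ^ 2) by (apply pow_le; lra).
  assert (0 <= x ^ (n - 2)) by (apply pow_le; lra). nra.
Qed.

Lemma iterc_zero (q : nat) (g : C -> C) : g (RtoC 0) = RtoC 0 -> iterc q g (RtoC 0) = RtoC 0.
Proof. intros H. induction q; simpl; auto. rewrite IHq. exact H. Qed.

Lemma cdiff_sub_id (f : C -> C) (z l : C) : cdiff f z l -> cdiff (fun w => f w - w)%C z (l - 1)%C.
Proof.
  intros H eps He. destruct (H eps He) as [d [Hd Hw]]. exists d. split; auto.
  intros w Hwz. specialize (Hw w Hwz).
  replace (f w - w - (f z - z) - (l - 1) * (w - z))%C with (f w - f z - l * (w - z))%C by ring. exact Hw.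
Qed.

Lemma path_cont_eps (gam : R -> C) (t : R) :
  (forall eps, 0 < eps -> exists del, 0 < del /\ forall t', unit_interval t' -> Rabs (t' - t) < del -> Cmod (gam t' - gam t) < eps) ->
  filterlim gam (within unit_interval (locally t)) (locally (gam t)).
Proof.
  intros H. apply filterlim_locally. intros eps.
  destruct (H eps (cond_pos eps)) as [d [Hd Hs]].
  exists (mkposreal d Hd). intros t' Hb Hin. apply ball_C_of_Cmod. apply Hs; auto.
Qed.

Lemma sq_cont_eps (H : R * R -> C) (p : R * R) :
  (forall eps, 0 < eps -> exists del, 0 < del /\ forall p', unit_square p' ->
     Rabs (fst p' - fst p) < del -> Rabs (snd p' - snd p) < del -> Cmod (H p' - H p) < eps) ->
  filterlim H (within unit_square (locally p)) (locally (H p)).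
Proof.
  intros Hc. apply filterlim_locally. intros eps.
  destruct (Hc eps (cond_pos eps)) as [d [Hd Hs]].
  exists (mkposreal d Hd). intros p' [Hb1 Hb2] Hin. apply ball_C_of_Cmod. apply Hs; auto.
Qed.

Definition icont (gam : R -> C) (t : R) := forall eps, 0 < eps -> exists del, 0 < del /\
  forall t', unit_interval t' -> Rabs (t' - t) < del -> Cmod (gam t' - gam t) < eps.

Lemma hom_cont (A B : R -> C) (p : R * R) : unit_square p -> icont A (snd p) -> icont B (snd p) ->
  forall eps, 0 < eps -> exists del, 0 < del /\ forall p', unit_square p' ->
     Rabs (fst p' - fst p) < del -> Rabs (snd p' - snd p) < del ->
     Cmod ((RtoC (1 - fst p') * A (snd p') + RtoC (fst p') * B (snd p')) - (RtoC (1 - fst p) * A (snd p) + RtoC (fst p) * B (snd p))) < eps.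
Proof.
  intros Hp HA HB eps He.
  destruct p as [s t]. simpl in *.
  set (K := Cmod (A t) + Cmod (B t) + 1).
  assert (HK : 0 < K) by (unfold K; pose proof (Cmod_ge_0 (A t)); pose proof (Cmod_ge_0 (B t)); lra).
  destruct (HA (eps / 4)) as [d1 [Hd1 H1]]; [lra|].
  destruct (HB (eps / 4)) as [d2 [Hd2 H2]]; [lra|].
  exists (Rmin (Rmin d1 d2) (eps / (4 * K))). split.
  { repeat apply Rmin_pos; try lra. apply Rdiv_lt_0_compat; lra. }
  intros [s' t'] [Hs' Ht'] Hds Hdt. simpl in *. unfold unit_interval in *.
  assert (Ht1 : Rabs (t' - t) < d1) by (eapply Rlt_le_trans; [exact Hdt|]; eapply Rle_trans; [apply Rmin_l|apply Rmin_l]).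
  assert (Ht2 : Rabs (t' - t) < d2) by (eapply Rlt_le_trans; [exact Hdt|]; eapply Rle_trans; [apply Rmin_l|apply Rmin_r]).
  assert (Hs3 : Rabs (s' - s) < eps / (4 * K)) by (eapply Rlt_le_trans; [exact Hds|apply Rmin_r]).
  specialize (H1 t' Ht' Ht1). specialize (H2 t' Ht' Ht2).
  replace (RtoC (1 - s') * A t' + RtoC s' * B t' - (RtoC (1 - s) * A t + RtoC s * B t))%C
    with (RtoC (1 - s') * (A t' - A t) + RtoC s' * (B t' - B t) + RtoC (s' - s) * (B t - A t))%C
    by (rewrite !RtoC_minus; ring).
  eapply Rle_lt_trans; [apply Cmod_triangle|].
  eapply Rle_lt_trans; [apply Rplus_le_compat_r; apply Cmod_triangle|].
  rewrite !Cmod_RtoC_mult. rewrite (Rabs_right (1 - s')), (Rabs_right s') by lra.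
  assert (Cmod (B t - A t) <= K).
  { replace (B t - A t)%C with (B t + - A t)%C by ring. eapply Rle_trans; [apply Cmod_triangle|].
    rewrite Cmod_opp. unfold K. lra. }
  assert (Rabs (s' - s) * Cmod (B t - A t) <= eps / (4 * K) * K).
  { apply Rmult_le_compat; try apply Rabs_pos; try apply Cmod_ge_0; lra. }
  assert (eps / (4 * K) * K = eps / 4) by (field; lra).
  pose proof (Cmod_ge_0 (A t' - A t)). pose proof (Cmod_ge_0 (B t' - B t)).
  nra.
Qed.

Theorem lemma4p3
  (q : nat) (lam : C) (g : C -> C) (b : C) (r0 : R)
  (gn : nat -> C -> C) (lamn : nat -> C) (wn : nat -> C) (r1 : R)
  (* q >= 1, lam a primitive q-th root of unity *)
  (Hq : (1 <= q)%nat)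
  (Hlam : primitive_root q lam)
  (* g(z) = lam z + O(z^2), holomorphic near 0 *)
  (Hg_hol : exists rho, 0 < rho /\ holomorphic_on (disk rho) g)
  (Hg_exp : exists K d, 0 < d /\ forall z, Cmod z < d ->
       Cmod (Cminus (g z) (Cmult lam z)) <= K * Cmod z ^ 2)
  (* f := g^q has the form z + z^(q+1) + b z^(2q+1) + O(z^(2q+2)) *)
  (Hf_exp : exists K d, 0 < d /\ forall z, Cmod z < d ->
       Cmod (Cminus (iterc q g z)
               (Cplus z (Cplus (Cpow z (q + 1)) (Cmult b (Cpow z (2 * q + 1))))))
       <= K * Cmod z ^ (2 * q + 2))
  (* 0 < r0 < 1, f univalent near the closed disk, 0 its only fixed point
     there, and Re f' > 0 there *)
  (Hr0 : 0 < r0 < 1)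
  (Hf_univ : univalent_near (cdisk r0) (iterc q g))
  (Hf_fix : forall z, cdisk r0 z -> iterc q g z = z -> z = RtoC 0)
  (Hf_re : forall z, cdisk r0 z -> 0 < Re (C_derive (iterc q g) z))
  (* g_n(z) = lam_n z + O(z^2), |lam_n| <> 1 *)
  (Hgn_hol : forall n, exists rho, 0 < rho /\ holomorphic_on (disk rho) (gn n))
  (Hgn_exp : forall n, exists K d, 0 < d /\ forall z, Cmod z < d ->
       Cmod (Cminus (gn n z) (Cmult (lamn n) z)) <= K * Cmod z ^ 2)
  (Hlamn : forall n, Cmod (lamn n) <> 1)
  (* f_n := g_n^q holomorphic near the closed disk, f_n -> f uniformly *)
  (Hfn_hol : forall n, holomorphic_near (cdisk r0) (iterc q (gn n)))
  (Hfn_cv : forall eps, 0 < eps -> exists N, forall n, (N <= n)%nat ->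
       forall z, cdisk r0 z -> Cmod (Cminus (iterc q (gn n) z) (iterc q g z)) < eps)
  (* for large n, the fixed points of f_n in the closed disk are 0 and the
     points of the q-cycle O_n of g_n through wn n *)
  (Hcycle : exists N, forall n, (N <= n)%nat ->
       wn n <> RtoC 0 /\ exact_period q (gn n) (wn n) /\
       forall z, cdisk r0 z ->
         (iterc q (gn n) z = z <-> (z = RtoC 0 \/ in_cycle q (gn n) (wn n) z)))
  (* choice of r1 *)
  (Hr1 : 0 < r1 < r0 / 2)
  (Hr1_f : forall z, cdisk r1 z -> disk r0 (iterc q g z))
  (Hr1_finv : forall z, cdisk r1 z -> exists w, disk r0 w /\ iterc q g w = z)
  (Hr1_fn : exists N, forall n, (N <= n)%nat ->
       forall z, cdisk r1 z -> Cmod (Cminus (iterc q (gn n) z) z) <= r1 / 2) :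
  exists r2, 0 < r2 < r1 /\
  exists N, forall n, (N <= n)%nat ->
  forall z0 : C,
    let z1 := iterc q (gn n) z0 in
    let z2 := iterc q (gn n) z1 in
    disk r2 z0 -> disk r2 z1 -> disk r2 z2 ->
    iterc q (gn n) z0 <> z0 -> iterc q (gn n) z1 <> z1 ->
    iterc q (gn n) z2 <> z2 ->
    homotopic_rel_endpoints
      (fun z => disk r1 z /\ z <> RtoC 0 /\ ~ in_cycle q (gn n) (wn n) z)
      (segment z1 z2)
      (fun t => iterc q (gn n) (segment z0 z1 t)).
Proof.
  destruct Hf_exp as [Kf [df [Hdf Hfe]]].
  destruct Hcycle as [Nc HNc].
  destruct Hr1 as [Hr1a Hr1b].
  set (f := iterc q g).
  set (A := 1 + Cmod b + Rabs Kf).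
  assert (HA : 1 <= A) by (unfold A; pose proof (Cmod_ge_0 b); pose proof (Rabs_pos Kf); lra).
  assert (Hfb : forall z, Cmod z < df -> Cmod z <= 1 -> Cmod (f z - z) <= A * Cmod z ^ 2).
  { intros z Hz1 Hz2. specialize (Hfe z Hz1).
    replace (f z - z)%C with ((iterc q g z - (z + (Cpow z (q + 1) + b * Cpow z (2 * q + 1))))
                              + (Cpow z (q + 1) + b * Cpow z (2 * q + 1)))%C by (unfold f; ring).
    eapply Rle_trans; [apply Cmod_triangle|].
    eapply Rle_trans; [apply Rplus_le_compat_l; apply Cmod_triangle|].
    rewrite Cmod_mult, !Cmod_pow.
    set (x := Cmod z) in *. assert (Hx0 : 0 <= x) by apply Cmod_ge_0.
    assert (P1 : x ^ (q + 1) <= x ^ 2) by (apply pow_le_sq; lia || lra).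
    assert (P2 : x ^ (2 * q + 1) <= x ^ 2) by (apply pow_le_sq; lia || lra).
    assert (P3 : x ^ (2 * q + 2) <= x ^ 2) by (apply pow_le_sq; lia || lra).
    assert (P4 : 0 <= x ^ (2 * q + 2)) by (apply pow_le; lra).
    assert (Kf * x ^ (2 * q + 2) <= Rabs Kf * x ^ 2).
    { apply Rle_trans with (Rabs Kf * x ^ (2 * q + 2)).
      - apply Rmult_le_compat_r; [lra|apply Rle_abs].
      - apply Rmult_le_compat_l; [apply Rabs_pos|lra]. }
    assert (Cmod b * x ^ (2 * q + 1) <= Cmod b * x ^ 2) by (apply Rmult_le_compat_l; [apply Cmod_ge_0|lra]).
    unfold A. lra. }
  set (Rd := Rmin (Rmin (df / 2) (r0 / 2)) (Rmin (1 / 2) (1 / (48 * A)))).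
  assert (HRd : 0 < Rd) by (unfold Rd; repeat apply Rmin_pos; try lra; apply Rdiv_lt_0_compat; lra).
  assert (HRd1 : Rd <= df / 2) by (unfold Rd; eapply Rle_trans; [apply Rmin_l|apply Rmin_l]).
  assert (HRd2 : Rd <= r0 / 2) by (unfold Rd; eapply Rle_trans; [apply Rmin_l|apply Rmin_r]).
  assert (HRd3 : Rd <= 1 / 2) by (unfold Rd; eapply Rle_trans; [apply Rmin_r|apply Rmin_l]).
  assert (HRd4 : Rd <= 1 / (48 * A)) by (unfold Rd; eapply Rle_trans; [apply Rmin_r|apply Rmin_r]).
  assert (HARd : 48 * A * Rd <= 1).
  { apply Rmult_le_compat_l with (r := 48 * A) in HRd4; [|lra].
    replace (48 * A * (1 / (48 * A))) with 1 in HRd4 by (field; lra). lra. }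
  set (eps1 := Rd / 48).
  destruct (Hfn_cv eps1 ltac:(unfold eps1; lra)) as [N1 HN1].
  set (rho' := Rd / 8).
  set (r2 := Rmin rho' r1 / 2).
  assert (Hr2a : 0 < r2) by (unfold r2, rho'; apply Rmult_lt_0_compat; [apply Rmin_pos; lra|lra]).
  assert (Hr2b : r2 <= rho' / 2) by (unfold r2; pose proof (Rmin_l rho' r1); lra).
  assert (Hr2c : r2 <= r1 / 2) by (unfold r2; pose proof (Rmin_r rho' r1); lra).
  exists r2. split; [lra|].
  exists (Nat.max N1 Nc). intros n Hn z0 z1 z2 Hd0 Hd1 Hd2 Hnf0 Hnf1 Hnf2.
  unfold disk in Hd0, Hd1, Hd2.
  set (fn := iterc q (gn n)) in *.
  assert (HN1n : forall z, cdisk r0 z -> Cmod (fn z - f z) < eps1) by (apply HN1; lia).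
  destruct (HNc n ltac:(lia)) as [_ [_ Hfix]].
  destruct (Hfn_hol n) as [U [_ [HUK HUh]]].
  assert (Hex : forall z, Cmod z < Rd -> @ex_derive C_AbsRing C_NormedModule fn z).
  { intros z Hz. apply HUh. apply HUK. unfold cdisk. lra. }
  assert (Hdiff : forall z, Cmod z < Rd -> exists l, cdiff (fun w => fn w - w)%C z l).
  { intros z Hz. eexists. apply cdiff_sub_id. apply ex_derive_cdiff. apply Hex; auto. }
  set (M := eps1 + A * Rd ^ 2).
  assert (HM : forall z, Cmod z < Rd -> Cmod (fn z - z) <= M).
  { intros z Hz.
    replace (fn z - z)%C with ((fn z - f z) + (f z - z))%C by ring.
    eapply Rle_trans; [apply Cmod_triangle|].
    assert (H1 : Cmod (fn z - f z) < eps1) by (apply HN1n; unfold cdisk; lra).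
    assert (H2 : Cmod (f z - z) <= A * Cmod z ^ 2) by (apply Hfb; lra).
    assert (Cmod z ^ 2 <= Rd ^ 2) by (pose proof (Cmod_ge_0 z); nra).
    unfold M. nra. }
  pose proof (cauchy_lip (fun w => fn w - w)%C Rd M HRd Hdiff HM) as Lip.
  set (eta := 8 * M / Rd).
  assert (Heta : 0 <= eta <= 1 / 3).
  { unfold eta, M, eps1. split.
    - apply Rmult_le_pos; [|left; apply Rinv_0_lt_compat; lra]. nra.
    - replace (8 * (Rd / 48 + A * Rd ^ 2) / Rd) with (1 / 6 + 8 * A * Rd) by (field; lra). lra. }
  assert (Lip' : forall x y, Cmod x < rho' -> Cmod y < rho' -> Cmod ((fn x - x) - (fn y - y)) <= eta * Cmod (x - y)).
  { intros x y Hx Hy. apply (Lip x y); unfold rho' in *; lra. }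
  assert (Hf0 : fn (RtoC 0) = RtoC 0).
  { apply iterc_zero. destruct (Hgn_exp n) as [Kg [dg [Hdg Hg0]]].
    specialize (Hg0 (RtoC 0) ltac:(rewrite Cmod_0; lra)).
    rewrite Cmod_0 in Hg0. replace (0 ^ 2) with 0 in Hg0 by ring. rewrite Rmult_0_r in Hg0.
    replace (gn n (RtoC 0) - lamn n * RtoC 0)%C with (gn n (RtoC 0)) in Hg0 by ring.
    apply Cmod_eq_0. pose proof (Cmod_ge_0 (gn n (RtoC 0))). lra. }
  assert (Hz0r : Cmod z0 < rho') by lra.
  assert (Hz1r : Cmod (fn z0) < rho') by (change (fn z0) with z1; lra).
  set (Hh := fun p : R * R => (RtoC (1 - fst p) * segment z1 z2 (snd p) + RtoC (fst p) * fn (segment z0 z1 (snd p)))%C).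
  assert (Hcore : forall s t w, 0 <= s <= 1 -> 0 <= t <= 1 -> Cmod w < rho' -> fn w = w ->
            segment z0 z1 t <> w /\ Cmod (segment z0 z1 t - w) / 2 <= Cmod (Hh (s, t) - w) /\
            Cmod (Hh (s, t) - w) <= 3 / 2 * Cmod (segment z0 z1 t - w)).
  { intros s t w Hs Ht Hw Hfw. exact (core fn rho' eta z0 s t w Heta Lip' Hz0r Hz1r Hnf0 Hs Ht Hw Hfw). }
  assert (Hseg : forall t, 0 <= t <= 1 -> Cmod (segment z0 z1 t) < r2).
  { intros t Ht. unfold segment. apply Rle_lt_trans with (Rmax (Cmod z0) (Cmod z1)).
    - apply convex_cdisk; auto; [apply Rmax_l|apply Rmax_r].
    - apply Rmax_lub_lt; auto. }
  assert (Hucont : forall t, 0 <= t <= 1 -> ucont fn (segment z0 z1 t)).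
  { intros t Ht eps He. eapply cdiff_cont; [apply ex_derive_cdiff; apply Hex|exact He].
    pose proof (Hseg t Ht). unfold rho' in Hr2b. lra. }
  assert (Hic1 : forall t, icont (segment z1 z2) t).
  { intros t eps He. exists (eps / (Cmod (z2 - z1) + 1)). split.
    { apply Rdiv_lt_0_compat; auto. pose proof (Cmod_ge_0 (z2 - z1)); lra. }
    intros t' _ Ht'. unfold segment.
    replace (z1 + RtoC t' * (z2 - z1) - (z1 + RtoC t * (z2 - z1)))%C with (RtoC (t' - t) * (z2 - z1))%C
      by (rewrite RtoC_minus; ring).
    rewrite Cmod_RtoC_mult. pose proof (Cmod_ge_0 (z2 - z1)). pose proof (Rabs_pos (t' - t)).
    apply Rmult_lt_compat_r with (r := Cmod (z2 - z1) + 1) in Ht'; [|lra].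
    unfold Rdiv in Ht'. rewrite Rmult_assoc, Rinv_l in Ht' by lra. nra. }
  assert (Hic2 : forall t, unit_interval t -> icont (fun t => fn (segment z0 z1 t)) t).
  { intros t Ht eps He. destruct (Hucont t Ht eps He) as [d [Hd Hdd]].
    exists (d / (Cmod (z1 - z0) + 1)). split.
    { apply Rdiv_lt_0_compat; auto. pose proof (Cmod_ge_0 (z1 - z0)); lra. }
    intros t' _ Ht'. apply Hdd. unfold segment.
    replace (z0 + RtoC t' * (z1 - z0) - (z0 + RtoC t * (z1 - z0)))%C with (RtoC (t' - t) * (z1 - z0))%C
      by (rewrite RtoC_minus; ring).
    rewrite Cmod_RtoC_mult. pose proof (Cmod_ge_0 (z1 - z0)). pose proof (Rabs_pos (t' - t)).
    apply Rmult_lt_compat_r with (r := Cmod (z1 - z0) + 1) in Ht'; [|lra].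
    unfold Rdiv in Ht'. rewrite Rmult_assoc, Rinv_l in Ht' by lra. nra. }
  assert (Eseg0 : forall a c : C, segment a c 0 = a) by (intros; unfold segment; ring).
  assert (Eseg1 : forall a c : C, segment a c 1 = c) by (intros; unfold segment; ring).
  split; [|split; [|split; [|split]]].
  - intros t Ht. apply path_cont_eps. apply Hic1.
  - intros t Ht. apply path_cont_eps. apply Hic2. exact Ht.
  - rewrite Eseg0, Eseg0. reflexivity.
  - rewrite Eseg1, Eseg1. reflexivity.
  - exists Hh. split; [|split; [|split; [|split; [|split]]]].
    + intros p Hp. apply sq_cont_eps. intros eps He.
      destruct (hom_cont (segment z1 z2) (fun t => fn (segment z0 z1 t)) p Hp (Hic1 _) (Hic2 _ (proj2 Hp)) eps He)
        as [d [Hd Hdd]].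
      exists d. split; auto.
    + intros [s t] [Hs Ht]. unfold unit_interval in Hs, Ht. simpl in *.
      destruct (Hcore s t (RtoC 0) Hs Ht ltac:(rewrite Cmod_0; unfold rho'; lra) Hf0) as [Hne [Hlo Hup]].
      replace (segment z0 z1 t - RtoC 0)%C with (segment z0 z1 t) in Hlo, Hup by ring.
      replace (Hh (s, t) - RtoC 0)%C with (Hh (s, t)) in Hlo, Hup by ring.
      pose proof (Hseg t Ht) as Hst.
      assert (HHr : Cmod (Hh (s, t)) < 3 / 4 * Rmin rho' r1).
      { unfold r2 in Hst. lra. }
      assert (Hmin1 : Rmin rho' r1 <= r1) by apply Rmin_r.
      assert (Hmin2 : Rmin rho' r1 <= rho') by apply Rmin_l.
      pose proof (Rmin_pos rho' r1 ltac:(unfold rho'; lra) Hr1a).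
      split; [|split].
      * unfold disk. lra.
      * intros H0. rewrite H0, Cmod_0 in Hlo. apply Hne. apply Cmod_eq_0. pose proof (Cmod_ge_0 (segment z0 z1 t)). lra.
      * intros Hic. 
        assert (Hfx : fn (Hh (s, t)) = Hh (s, t)).
        { apply (proj2 (Hfix (Hh (s, t)) ltac:(unfold cdisk; lra))). right. exact Hic. }
        destruct (Hcore s t (Hh (s, t)) Hs Ht ltac:(lra) Hfx) as [Hne2 [Hlo2 _]].
        replace (Hh (s, t) - Hh (s, t))%C with (RtoC 0) in Hlo2 by ring. rewrite Cmod_0 in Hlo2.
        apply Hne2. apply Ceq_minus. apply Cmod_eq_0. pose proof (Cmod_ge_0 (segment z0 z1 t - Hh (s, t))). lra.
    + intros t Ht. unfold Hh. simpl. replace (1 - 0) with 1 by ring. ring.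
    + intros t Ht. unfold Hh. simpl. replace (1 - 1) with 0 by ring. ring.
    + intros s Hs. unfold Hh. simpl. rewrite !Eseg0. change (fn z0) with z1.
      rewrite RtoC_minus. ring.
    + intros s Hs. unfold Hh. simpl. rewrite !Eseg1. change (fn z1) with z2.
      rewrite RtoC_minus. ring.
Qed.
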